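(* Let $N\ge 1$ be an integer, $\phi\in(-\pi/2,\pi/2)$ and $\lambda\in\mathbb{C}$. Consider the two equations $$-e^{-2i\phi}w''(x)-(ix)^{N+2}e^{(N+2)i\phi}w(x)=\lambda w(x),\quad x\in\mathbb{R}_+=[0,\infty),$$ $$-e^{2i\phi}w''(x)-(ix)^{N+2}e^{-(N+2)i\phi}w(x)=\lambda w(x),\quad x\in\mathbb{R}_-=(-\infty,0].$$ For each of these two equations exactly one of the following holds, independently of $\lambda$: (I) If $\phi\neq -\frac{N+2}{2N+8}\pi+\frac{2k}{N+4}\pi$ for all $k\in\mathbb{Z}$, then the equation has, up to a constant multiple, exactly one nonzero solution $w$ with $w\in L^2(\mathbb{R}_\pm)$ (respectively), and in particular it has a solution not in $L^2(\mathbb{R}_\pm)$ (limit-point case). (II) If $\phi=-\frac{N+2}{2N+8}\pi+\frac{2k}{N+4}\pi$ for some $k\in\mathbb{Z}$, then all solutions of the equation lie in $L^2(\mathbb{R}_\pm)$ (limit-circle case).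
   Context: These equations arise from $-y''(z)-(iz)^{N+2}y(z)=\lambda y(z)$ on the contour $\Gamma=\{xe^{i\phi\,\mathrm{sgn}(x)}:x\in\mathbb{R}\}$ via $w(x)=y(xe^{i\phi\,\mathrm{sgn}(x)})$. Solutions are understood as functions $w$ with $w,w'$ locally absolutely continuous on the respective half-line. *)

(* Defs.v *)
From Stdlib Require Import Reals ZArith.
Open Scope R_scope.

Definition Cx : Type := (R * R)%type.
Definition Cre (z : Cx) : R := fst z.
Definition Cim (z : Cx) : R := snd z.
Definition Cadd (z w : Cx) : Cx := (Cre z + Cre w, Cim z + Cim w).
Definition Copp (z : Cx) : Cx := (- Cre z, - Cim z).
Definition Cmul (z w : Cx) : Cx :=
  (Cre z * Cre w - Cim z * Cim w, Cre z * Cim w + Cim z * Cre w).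
Fixpoint Cpow (z : Cx) (n : nat) : Cx :=
  match n with O => (1, 0) | S m => Cmul z (Cpow z m) end.
Definition Cexpi (t : R) : Cx := (cos t, sin t).
Definition Cnorm2 (z : Cx) : R := Cre z * Cre z + Cim z * Cim z.

Definition derivC (f g : R -> Cx) (x : R) : Prop :=
  derivable_pt_lim (fun t => Cre (f t)) x (Cre (g x)) /\
  derivable_pt_lim (fun t => Cim (f t)) x (Cim (g x)).

Definition solves (P : R -> Prop) (a : Cx) (q : R -> Cx) (lam : Cx)
    (w : R -> Cx) : Prop :=
  exists w1 w2 : R -> Cx, forall x, P x ->
    derivC w w1 x /\ derivC w1 w2 x /\
    Cadd (Copp (Cmul a (w2 x))) (Copp (Cmul (q x) (w x))) = Cmul lam (w x).

(* w is square integrable on the interval P: the integrals of |w|^2 over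
   all compact subintervals [a,b] of P are uniformly bounded. *)
Definition L2_on (P : R -> Prop) (w : R -> Cx) : Prop :=
  exists M : R, forall a b : R, P a -> P b -> a <= b ->
    forall pr : Riemann_integrable (fun t => Cnorm2 (w t)) a b,
      RiemannInt pr <= M.

Definition Rpos (x : R) : Prop := 0 < x.
Definition Rneg (x : R) : Prop := x < 0.

Definition a_plus (phi : R) : Cx := Cexpi (-2 * phi).
Definition q_plus (N : nat) (phi : R) (x : R) : Cx :=
  Cmul (Cpow (0, x) (N + 2)) (Cexpi (INR (N + 2) * phi)).
Definition a_minus (phi : R) : Cx := Cexpi (2 * phi).
Definition q_minus (N : nat) (phi : R) (x : R) : Cx :=
  Cmul (Cpow (0, x) (N + 2)) (Cexpi (- INR (N + 2) * phi)).

Definition exceptional (N : nat) (phi : R) : Prop :=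
  exists k : Z, phi = - (INR N + 2) / (2 * INR N + 8) * PI
                      + 2 * IZR k / (INR N + 4) * PI.

Definition limit_point (P : R -> Prop) (a : Cx) (q : R -> Cx) (lam : Cx) : Prop :=
  (exists w, solves P a q lam w /\ L2_on P w /\ (exists x, P x /\ w x <> (0, 0)) /\
     forall v, solves P a q lam v -> L2_on P v ->
       exists c : Cx, forall x, P x -> v x = Cmul c (w x)) /\
  (exists v, solves P a q lam v /\ ~ L2_on P v).

Definition limit_circle (P : R -> Prop) (a : Cx) (q : R -> Cx) (lam : Cx) : Prop :=
  forall w, solves P a q lam w -> L2_on P w.

(* Main.v *)
Require Import Defs.
From Stdlib Require Import Reals ZArith Lra Lia Psatz Arith Classical FunctionalExtensionality IndefiniteDescription.
From Coquelicot Require Import Rcomplements Rbar Hierarchy Derive RInt RInt_analysis Continuity AutoDerive ElemFct Series PSeries.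
Open Scope R_scope.

Arguments Rplus : simpl never.
Arguments Rmult : simpl never.
Arguments Ropp : simpl never.
Arguments Rinv : simpl never.
Arguments Rminus : simpl never.
Arguments Rdiv : simpl never.
Arguments IZR : simpl never.
Arguments Rabs : simpl never.
Arguments pow : simpl never.

Ltac dsub := repeat match goal with |- context [Derive ?f ?x] => let H := fresh in assert (H : Derive f x = _) by (apply is_derive_unique; eassumption); rewrite H; clear H end.

Ltac hs := repeat (progress (try unfold scal in *; try unfold mult in *; try unfold opp in *; try unfold plus in *; try unfold minus in *; try unfold zero in *; try unfold one in *; simpl in *)).

Ltac hsg := repeat (progress (try unfold scal; try unfold mult; try unfold opp; try unfold plus; try unfold minus; try unfold zero; try unfold one; simpl)).

Lemma is_derive_eq (f : R -> R) x l l' : is_derive f x l -> l = l' -> is_derive f x l'.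
Proof. intros H ->; exact H. Qed.

Lemma incr_of_deriv (f df : R -> R) a b : a <= b ->
  (forall x, a <= x <= b -> is_derive f x (df x) /\ 0 <= df x) -> f a <= f b.
Proof.
intros Hab H. destruct (Rle_lt_or_eq_dec _ _ Hab) as [Hlt|Heq]; [|subst; lra].
destruct (MVT_cor2 f df a b Hlt) as [c [Hc1 Hc2]].
- intros c Hc. apply is_derive_Reals. apply H; lra.
- assert (0 <= df c) by (apply H; lra). nra.
Qed.

Lemma gron_gen (F dF H dH : R -> R) a b : a <= b ->
  (forall x, a <= x <= b -> is_derive F x (dF x) /\ is_derive H x (dH x) /\ dF x <= dH x * F x) ->
  F b <= F a * exp (H b - H a).
Proof.
intros Hab Hd.
set (Phi := fun x => - (F x * exp (- H x))).
assert (Phi a <= Phi b).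
{ apply (incr_of_deriv Phi (fun x => - ((dF x - dH x * F x) * exp (- H x)))); auto.
  intros x Hx. destruct (Hd x Hx) as [H1 [H2 H3]]. split.
  - unfold Phi. eapply is_derive_eq.
    + apply @is_derive_opp. apply (is_derive_mult F (fun x => exp (- H x))). exact H1.
      apply (is_derive_comp exp (fun x => - H x)). apply is_derive_exp. apply @is_derive_opp. exact H2.
      intros; apply Rmult_comm.
    + hs; ring.
  - assert (0 < exp (- H x)) by apply exp_pos. nra. }
unfold Phi in H0.
assert (Hp : 0 < exp (H b)) by apply exp_pos.
replace (exp (H b - H a)) with (exp (H b) * exp (- H a)) by (rewrite <- exp_plus; f_equal; ring).
assert (F b * exp (- H b) <= F a * exp (- H a)) by lra.
replace (F b) with (F b * exp (- H b) * exp (H b)).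
- nra.
- rewrite Rmult_assoc, <- exp_plus. replace (- H b + H b) with 0 by ring. rewrite exp_0; ring.
Qed.

Lemma gron_bwd (F dF H dH : R -> R) a b : a <= b ->
  (forall x, a <= x <= b -> is_derive F x (dF x) /\ is_derive H x (dH x) /\ - (dH x * F x) <= dF x) ->
  F a <= F b * exp (H b - H a).
Proof.
intros Hab Hd.
set (Phi := fun x => (F x * exp (H x))).
assert (Phi a <= Phi b).
{ apply (incr_of_deriv Phi (fun x => ((dF x + dH x * F x) * exp (H x)))); auto.
  intros x Hx. destruct (Hd x Hx) as [H1 [H2 H3]]. split.
  - unfold Phi. eapply is_derive_eq.
    + apply (is_derive_mult F (fun x => exp (H x))). exact H1.
      apply (is_derive_comp exp H). apply is_derive_exp. exact H2.
      intros; apply Rmult_comm.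
    + hs; ring.
  - assert (0 < exp (H x)) by apply exp_pos. nra. }
unfold Phi in H0.
replace (exp (H b - H a)) with (exp (H b) * exp (- H a)) by (rewrite <- exp_plus; f_equal; ring).
assert (Hp : 0 < exp (- H a)) by apply exp_pos.
replace (F a) with (F a * exp (H a) * exp (- H a)).
- nra.
- rewrite Rmult_assoc, <- exp_plus. replace (H a + - H a) with 0 by ring. rewrite exp_0; ring.
Qed.

Lemma is_derive_lin (L x : R) : is_derive (fun y => L * y) x L.
Proof. auto_derive. auto. ring. Qed.

Ltac Rring := lazymatch goal with |- @eq _ ?a ?b => change (@eq R a b) end; ring.


Lemma cont_iff (f : R -> R) x : continuity_pt f x <-> continuous f x.
Proof. rewrite continuity_pt_filterlim. reflexivity. Qed.

Lemma RInt_ge_prim (f H h : R -> R) a b c d : c < a -> a <= b -> b < d ->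
  (forall x, c < x < d -> continuous f x) ->
  (forall x, a <= x <= b -> is_derive H x (h x) /\ h x <= f x) ->
  H b - H a <= RInt f a b.
Proof.
intros Hca Hab Hbd Hc Hd.
assert (Hex : forall y, c < y < d -> ex_RInt f a y).
{ intros y Hy. apply (@ex_RInt_continuous R_CompleteNormedModule). intros z Hz. apply Hc.
  split. apply Rlt_le_trans with (Rmin a y). apply Rmin_glb_lt; lra. apply Hz.
  apply Rle_lt_trans with (Rmax a y). apply Hz. apply Rmax_lub_lt; lra. }
set (K := fun x => RInt f a x - H x).
assert (K a <= K b).
{ apply (incr_of_deriv K (fun x => f x - h x)); auto.
  intros x Hx. destruct (Hd x Hx) as [H1 H2]. split; [|lra].
  unfold K. eapply is_derive_eq.
  - apply @is_derive_minus; [|exact H1].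
    apply (is_derive_RInt f (RInt f a) a x).
    + apply (locally_interval _ x c d); simpl; try lra.
      intros y Hy1 Hy2. apply (@RInt_correct R_CompleteNormedModule). apply Hex; lra.
    + apply Hc; lra.
  - hs. ring. }
unfold K in H0. rewrite RInt_point in H0. unfold zero in H0; simpl in H0. lra.
Qed.

Lemma RInt_le_prim (f H h : R -> R) a b c d : c < a -> a <= b -> b < d ->
  (forall x, c < x < d -> continuous f x) ->
  (forall x, a <= x <= b -> is_derive H x (h x) /\ f x <= h x) ->
  RInt f a b <= H b - H a.
Proof.
intros Hca Hab Hbd Hc Hd.
assert (Hex : ex_RInt f a b).
{ apply (@ex_RInt_continuous R_CompleteNormedModule). intros z Hz. apply Hc. rewrite Rmin_left, Rmax_right in Hz; lra. }
assert (HH : - H b - - H a <= RInt (fun x => opp (f x)) a b).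
{ apply (RInt_ge_prim (fun x => opp (f x)) (fun x => - H x) (fun x => - h x) a b c d Hca Hab Hbd).
  - intros x Hx. apply @continuous_opp. apply Hc; exact Hx.
  - intros x Hx. destruct (Hd x Hx). split. apply @is_derive_opp. auto. hs. lra. }
assert (E : RInt (fun x => opp (f x)) a b = opp (RInt f a b)) by exact (@RInt_opp R_CompleteNormedModule f a b Hex).
rewrite E in HH. hs. lra.
Qed.

Lemma Cnorm2_ge0 z : 0 <= Cnorm2 z.
Proof. unfold Cnorm2. nra. Qed.

Lemma Cnorm2_mul a z : Cnorm2 (Cmul a z) = Cnorm2 a * Cnorm2 z.
Proof. destruct a, z. unfold Cnorm2, Cmul, Cre, Cim; simpl. ring. Qed.

Lemma Cnorm2_add_le z y : Cnorm2 (Cadd z y) <= 2 * Cnorm2 z + 2 * Cnorm2 y.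
Proof. destruct z as [a b], y as [c d]. unfold Cnorm2, Cadd, Cre, Cim; simpl. pose proof (pow2_ge_0 (a-c)); pose proof (pow2_ge_0 (b-d)). nra. Qed.

Lemma Cnorm2_eq0 z : Cnorm2 z = 0 -> z = (0,0).
Proof. destruct z as [x y]. unfold Cnorm2, Cre, Cim; simpl. intros. assert (x = 0) by nra. assert (y = 0) by nra. subst; reflexivity. Qed.

Definition contP (w : R -> Cx) := forall t, 0 < t -> continuous (fun s => Cnorm2 (w s)) t.

Lemma L2_from (w : R -> Cx) t0 B M : 0 < t0 -> contP w ->
  (forall t, 0 < t <= t0 -> Cnorm2 (w t) <= B) ->
  (forall a b, t0 <= a -> a <= b -> RInt (fun s => Cnorm2 (w s)) a b <= M) ->
  L2_on Rpos w.
Proof.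
intros Ht0 Hc HB HM.
set (f := fun s => Cnorm2 (w s)).
assert (Hex : forall a b, 0 < a -> a <= b -> ex_RInt f a b).
{ intros a b Ha Hab. apply (@ex_RInt_continuous R_CompleteNormedModule). intros z Hz. apply Hc.
  rewrite Rmin_left in Hz; lra. }
exists (Rmax B 0 * t0 + Rmax M 0).
intros a b Ha Hb Hab pr. unfold Rpos in *.
rewrite <- (RInt_Reals _ _ _ pr). fold f.
assert (HBm : B <= Rmax B 0) by apply Rmax_l. assert (0 <= Rmax B 0) by apply Rmax_r.
assert (HMm : M <= Rmax M 0) by apply Rmax_l. assert (0 <= Rmax M 0) by apply Rmax_r.
assert (Hlow : forall a b, 0 < a -> a <= b -> b <= t0 -> RInt f a b <= Rmax B 0 * t0).
{ intros a' b' Ha' Hab' Hbt.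
  apply Rle_trans with (RInt (fun _ => Rmax B 0) a' b').
  - apply RInt_le; auto. apply ex_RInt_const. intros x Hx. unfold f. specialize (HB x). lra.
  - rewrite RInt_const. hs. nra. }
destruct (Rle_dec b t0) as [Hb0|Hb0].
- specialize (Hlow a b Ha Hab Hb0). nra.
- destruct (Rle_dec a t0) as [Ha0|Ha0].
  + rewrite <- (RInt_Chasles f a t0 b) by (apply Hex; lra). hs.
    specialize (Hlow a t0 Ha Ha0 (Rle_refl _)). specialize (HM t0 b (Rle_refl _) ltac:(lra)). fold f in HM. lra.
  + specialize (HM a b ltac:(lra) Hab). fold f in HM. nra.
Qed.

Lemma not_L2 (w : R -> Cx) t1 (H h : R -> R) : 0 < t1 -> contP w ->
  (forall t, t1 <= t -> is_derive H t (h t) /\ h t <= Cnorm2 (w t)) ->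
  (forall M, exists X, t1 <= X /\ M < H X - H t1) ->
  ~ L2_on Rpos w.
Proof.
intros Ht1 Hc Hd Hun [M HM].
destruct (Hun M) as [X [HX1 HX2]].
assert (pr : Riemann_integrable (fun t => Cnorm2 (w t)) t1 X).
{ apply continuity_implies_RiemannInt; auto. intros x Hx. apply cont_iff. apply Hc. lra. }
specialize (HM t1 X Ht1 ltac:(unfold Rpos; lra) HX1 pr).
rewrite <- RInt_Reals in HM.
enough (H X - H t1 <= RInt (fun t => Cnorm2 (w t)) t1 X) by lra.
apply (RInt_ge_prim _ H h t1 X (t1/2) (X+1)); try lra.
- intros x Hx. apply Hc. lra.
- intros x Hx. apply Hd. lra.
Qed.

Lemma is_RInt_refl (f : R -> R) a b I : is_RInt f a b I -> is_RInt (fun y => f (-y)) (-b) (-a) I.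
Proof.
intros H.
assert (H1 : is_RInt f (- - a) (- - b) I) by (rewrite !Ropp_involutive; exact H).
apply (is_RInt_comp_opp f (-a) (-b)) in H1.
apply is_RInt_opp in H1.
apply is_RInt_swap in H1.
rewrite opp_opp in H1.
eapply is_RInt_ext; [|exact H1]. intros x _. hs. ring.
Qed.

Lemma Rint_refl (f : R -> R) a b (pr : Riemann_integrable (fun t => f (-t)) a b) :
  exists pr' : Riemann_integrable f (-b) (-a), RiemannInt pr' = RiemannInt pr.
Proof.
assert (H : is_RInt (fun t => f (-t)) a b (RiemannInt pr)).
{ rewrite <- RInt_Reals. apply (@RInt_correct R_CompleteNormedModule). apply ex_RInt_Reals_1. exact pr. }
apply is_RInt_refl in H.
assert (H2 : is_RInt f (-b) (-a) (RiemannInt pr)).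
{ eapply is_RInt_ext; [|exact H]. intros x _. simpl. rewrite Ropp_involutive. reflexivity. }
assert (Hex : ex_RInt f (-b) (-a)) by (eexists; exact H2).
exists (ex_RInt_Reals_0 _ _ _ Hex).
rewrite <- RInt_Reals. apply is_RInt_unique. exact H2.
Qed.

Lemma L2_refl (w : R -> Cx) : L2_on Rneg w <-> L2_on Rpos (fun t => w (-t)).
Proof.
split; intros [M HM]; exists M; intros a b Ha Hb Hab pr.
- destruct (Rint_refl (fun t => Cnorm2 (w t)) a b pr) as [pr' E]. rewrite <- E.
  apply HM; unfold Rneg, Rpos in *; lra.
- assert (pr2 : Riemann_integrable (fun t => Cnorm2 (w (- - t))) a b).
  { eapply Riemann_integrable_ext; [|exact pr]. intros x _. rewrite Ropp_involutive. reflexivity. }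
  destruct (Rint_refl (fun t => Cnorm2 (w (- t))) a b pr2) as [pr' E].
  assert (RiemannInt pr = RiemannInt pr2).
  { rewrite <- !RInt_Reals. apply RInt_ext. intros x _. rewrite Ropp_involutive. reflexivity. }
  rewrite H, <- E. apply HM; unfold Rneg, Rpos in *; lra.
Qed.

Lemma L2_comb (v w : R -> Cx) al be : contP v -> contP w -> L2_on Rpos v -> L2_on Rpos w ->
  L2_on Rpos (fun t => Cadd (Cmul al (v t)) (Cmul be (w t))).
Proof.
intros Hcv Hcw [Mv Hv] [Mw Hw].
exists (2 * Cnorm2 al * Mv + 2 * Cnorm2 be * Mw).
intros a b Ha Hb Hab pr. unfold Rpos in *.
set (fv := fun t => Cnorm2 (v t)). set (fw := fun t => Cnorm2 (w t)).
assert (Hexv : ex_RInt fv a b).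
{ apply (@ex_RInt_continuous R_CompleteNormedModule). intros z Hz. apply Hcv. rewrite Rmin_left in Hz; lra. }
assert (Hexw : ex_RInt fw a b).
{ apply (@ex_RInt_continuous R_CompleteNormedModule). intros z Hz. apply Hcw. rewrite Rmin_left in Hz; lra. }
specialize (Hv a b Ha Hb Hab (ex_RInt_Reals_0 _ _ _ Hexv)).
specialize (Hw a b Ha Hb Hab (ex_RInt_Reals_0 _ _ _ Hexw)).
rewrite <- RInt_Reals in Hv, Hw. rewrite <- RInt_Reals. fold fv in Hv. fold fw in Hw.
set (k1 := 2 * Cnorm2 al). set (k2 := 2 * Cnorm2 be).
assert (Hk1 : 0 <= k1) by (unfold k1; pose proof (Cnorm2_ge0 al); lra).
assert (Hk2 : 0 <= k2) by (unfold k2; pose proof (Cnorm2_ge0 be); lra).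
assert (Hex2 : ex_RInt (fun x => plus (scal k1 (fv x)) (scal k2 (fw x))) a b).
{ apply @ex_RInt_plus; apply @ex_RInt_scal; assumption. }
apply Rle_trans with (RInt (fun x => plus (scal k1 (fv x)) (scal k2 (fw x))) a b).
- apply RInt_le; auto. apply ex_RInt_Reals_1; exact pr.
  intros x _. hs. unfold fv, fw, k1, k2.
  pose proof (Cnorm2_add_le (Cmul al (v x)) (Cmul be (w x))).
  rewrite !Cnorm2_mul in H. lra.
- rewrite (@RInt_plus R_CompleteNormedModule) by (apply @ex_RInt_scal; assumption).
  rewrite !(@RInt_scal R_CompleteNormedModule) by assumption. hs. nra.
Qed.


Definition Qf (m : nat) (c1 c2 mu1 mu2 : R) (t : R) : Cx := (c1 * t ^ m + mu1, c2 * t ^ m + mu2).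

Definition sol (Q : R -> Cx) (w w1 w2 : R -> Cx) : Prop :=
  forall t, 0 < t -> derivC w w1 t /\ derivC w1 w2 t /\ w2 t = Cmul (Q t) (w t).

Definition solvesQ Q w := exists w1 w2, sol Q w w1 w2.

Lemma derivC_iff (w w1 : R -> Cx) t :
  derivC w w1 t <-> is_derive (fun s => fst (w s)) t (fst (w1 t)) /\ is_derive (fun s => snd (w s)) t (snd (w1 t)).
Proof. unfold derivC, Cre, Cim. rewrite !is_derive_Reals. tauto. Qed.

Lemma sol_d Q w w1 w2 t : sol Q w w1 w2 -> 0 < t ->
  is_derive (fun s => fst (w s)) t (fst (w1 t)) /\ is_derive (fun s => snd (w s)) t (snd (w1 t)) /\
  is_derive (fun s => fst (w1 s)) t (fst (Q t) * fst (w t) - snd (Q t) * snd (w t)) /\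
  is_derive (fun s => snd (w1 s)) t (fst (Q t) * snd (w t) + snd (Q t) * fst (w t)).
Proof.
intros H Ht. destruct (H t Ht) as [H1 [H2 H3]].
apply derivC_iff in H1. apply derivC_iff in H2. rewrite H3 in H2.
unfold Cmul, Cre, Cim in H2; simpl in H2. tauto.
Qed.

Lemma d_sq2 (u1 u2 : R -> R) d1 d2 t : is_derive u1 t d1 -> is_derive u2 t d2 ->
  is_derive (fun s => u1 s * u1 s + u2 s * u2 s) t (2 * (u1 t * d1 + u2 t * d2)).
Proof. intros H1 H2. auto_derive. repeat split; eexists; eassumption. dsub. ring. Qed.

Lemma Cnorm2_deriv (w w1 : R -> Cx) t : derivC w w1 t ->
  is_derive (fun s => Cnorm2 (w s)) t (2 * (fst (w t) * fst (w1 t) + snd (w t) * snd (w1 t))).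
Proof.
intros H. apply derivC_iff in H. destruct H as [H1 H2]. unfold Cnorm2, Cre, Cim.
exact (d_sq2 (fun s => fst (w s)) (fun s => snd (w s)) _ _ t H1 H2).
Qed.

Lemma sol_contP Q w w1 w2 : sol Q w w1 w2 -> contP w.
Proof.
intros H t Ht. apply (@ex_derive_continuous R_AbsRing R_NormedModule). eexists. apply Cnorm2_deriv. apply H; auto.
Qed.

Lemma sol_contP1 Q w w1 w2 : sol Q w w1 w2 -> contP w1.
Proof.
intros H t Ht. apply (@ex_derive_continuous R_AbsRing R_NormedModule). eexists. apply Cnorm2_deriv. apply H; auto.
Qed.

Lemma abs22 a b c d : Rabs (2 * (a * b + c * d)) <= a * a + b * b + c * c + d * d.
Proof.
apply Rabs_le. pose proof (pow2_ge_0 (a - b)). pose proof (pow2_ge_0 (a + b)).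
pose proof (pow2_ge_0 (c - d)). pose proof (pow2_ge_0 (c + d)). split; nra.
Qed.

Lemma abs_lin_le k A E : Rabs A <= E -> Rabs (k * A) <= Rabs k * E.
Proof. intros. rewrite Rabs_mult. apply Rmult_le_compat_l; auto. apply Rabs_pos. Qed.

Definition En (w w1 : R -> Cx) t := Cnorm2 (w t) + Cnorm2 (w1 t).

Definition dEn (w w1 w2 : R -> Cx) t := 2 * (fst (w t) * fst (w1 t) + snd (w t) * snd (w1 t)) +
  2 * (fst (w1 t) * fst (w2 t) + snd (w1 t) * snd (w2 t)).

Lemma En_deriv Q w w1 w2 t : sol Q w w1 w2 -> 0 < t ->
  is_derive (En w w1) t (dEn w w1 w2 t) /\ Rabs (dEn w w1 w2 t) <= (1 + Rabs (fst (Q t)) + Rabs (snd (Q t))) * En w w1 t.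
Proof.
intros H Ht. destruct (H t Ht) as [H1 [H2 H3]].
pose proof (Cnorm2_deriv _ _ _ H1) as D1. pose proof (Cnorm2_deriv _ _ _ H2) as D2.
split. apply (@is_derive_plus R_AbsRing R_NormedModule); [exact D1|exact D2].
unfold dEn. rewrite H3. unfold En, Cnorm2, Cmul, Cre, Cim. simpl.
destruct (w t) as [u1 u2]. destruct (w1 t) as [p1 p2]. destruct (Q t) as [q1 q2]. simpl. hs.
set (E := u1 * u1 + u2 * u2 + (p1 * p1 + p2 * p2)).
assert (A0 : Rabs (2 * (u1 * p1 + u2 * p2)) <= E) by (pose proof (abs22 u1 p1 u2 p2); unfold E; lra).
assert (A1 : Rabs (2 * (p1 * u1 + p2 * u2)) <= E) by (pose proof (abs22 p1 u1 p2 u2); unfold E; lra).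
assert (A2 : Rabs (2 * (p2 * u1 - p1 * u2)) <= E).
{ pose proof (abs22 p2 u1 (-p1) u2). replace (p2 * u1 + - p1 * u2) with (p2 * u1 - p1 * u2) in H0 by ring.
  replace (- p1 * - p1) with (p1 * p1) in H0 by ring. unfold E; lra. }
pose proof (abs_lin_le q1 _ _ A1). pose proof (abs_lin_le q2 _ _ A2).
replace (2 * (u1 * p1 + u2 * p2) + 2 * (p1 * (q1 * u1 - q2 * u2) + p2 * (q1 * u2 + q2 * u1)))
  with (2 * (u1 * p1 + u2 * p2) + q1 * (2 * (p1 * u1 + p2 * u2)) + q2 * (2 * (p2 * u1 - p1 * u2))) by ring.
pose proof (Rabs_triang (2 * (u1 * p1 + u2 * p2) + q1 * (2 * (p1 * u1 + p2 * u2))) (q2 * (2 * (p2 * u1 - p1 * u2)))).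
pose proof (Rabs_triang (2 * (u1 * p1 + u2 * p2)) (q1 * (2 * (p1 * u1 + p2 * u2)))).
fold E. lra.
Qed.

Lemma Qf_bound m c1 c2 mu1 mu2 t T : 0 < t <= T ->
  Rabs (fst (Qf m c1 c2 mu1 mu2 t)) + Rabs (snd (Qf m c1 c2 mu1 mu2 t)) <= (Rabs c1 + Rabs c2) * T ^ m + Rabs mu1 + Rabs mu2.
Proof.
intros Ht. unfold Qf; simpl.
assert (0 <= t ^ m <= T ^ m) by (split; [apply pow_le; lra | apply pow_incr; lra]).
pose proof (Rabs_triang (c1 * t ^ m) mu1). pose proof (Rabs_triang (c2 * t ^ m) mu2).
rewrite !Rabs_mult, !(Rabs_right (t^m)) in * by lra.
assert (Rabs c1 * t ^ m <= Rabs c1 * T ^ m) by (apply Rmult_le_compat_l; [apply Rabs_pos|lra]).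
assert (Rabs c2 * t ^ m <= Rabs c2 * T ^ m) by (apply Rmult_le_compat_l; [apply Rabs_pos|lra]).
lra.
Qed.

Lemma bound_help d K E L : Rabs d <= K * E -> K <= L -> 0 <= E -> d <= L * E /\ - (L * E) <= d.
Proof. intros H1 H2 H3. assert (K * E <= L * E) by (apply Rmult_le_compat_r; auto).
  apply Rabs_le_between in H1. lra. Qed.

Lemma exp_mono x y : x <= y -> exp x <= exp y.
Proof. intros H. destruct (Rle_lt_or_eq_dec _ _ H). apply Rlt_le, exp_increasing; auto. subst; lra. Qed.

Lemma En_nonneg w w1 t : 0 <= En w w1 t.
Proof. unfold En. pose proof (Cnorm2_ge0 (w t)). pose proof (Cnorm2_ge0 (w1 t)). lra. Qed.

Lemma uniq0 m c1 c2 mu1 mu2 w w1 w2 x1 : sol (Qf m c1 c2 mu1 mu2) w w1 w2 -> 0 < x1 ->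
  w x1 = (0,0) -> w1 x1 = (0,0) -> forall t, 0 < t -> w t = (0,0) /\ w1 t = (0,0).
Proof.
intros H Hx1 E0 E1 t Ht.
assert (Ex1 : En w w1 x1 = 0) by (unfold En; rewrite E0, E1; unfold Cnorm2, Cre, Cim; simpl; ring).
assert (Et : En w w1 t <= 0).
{ destruct (Rle_dec x1 t) as [Hle|Hlt].
  - set (L := 1 + ((Rabs c1 + Rabs c2) * t ^ m + Rabs mu1 + Rabs mu2)).
    pose proof (gron_gen (En w w1) (dEn w w1 w2) (fun x => L * x) (fun _ => L) x1 t Hle) as G.
    rewrite Ex1, Rmult_0_l in G. apply G.
    intros x Hx. destruct (En_deriv _ _ _ _ x H ltac:(lra)) as [D B]. split; [exact D|split].
    + apply is_derive_lin.
    + pose proof (Qf_bound m c1 c2 mu1 mu2 x t ltac:(lra)). pose proof (En_nonneg w w1 x).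
      apply (bound_help _ _ _ L) in B; [tauto|unfold L; lra|auto].
  - set (L := 1 + ((Rabs c1 + Rabs c2) * x1 ^ m + Rabs mu1 + Rabs mu2)).
    pose proof (gron_bwd (En w w1) (dEn w w1 w2) (fun x => L * x) (fun _ => L) t x1 ltac:(lra)) as G.
    rewrite Ex1, Rmult_0_l in G. apply G.
    intros x Hx. destruct (En_deriv _ _ _ _ x H ltac:(lra)) as [D B]. split; [exact D|split].
    + apply is_derive_lin.
    + pose proof (Qf_bound m c1 c2 mu1 mu2 x x1 ltac:(lra)). pose proof (En_nonneg w w1 x).
      apply (bound_help _ _ _ L) in B; [tauto|unfold L; lra|auto]. }
pose proof (En_nonneg w w1 t). unfold En in *.
pose proof (Cnorm2_ge0 (w t)). pose proof (Cnorm2_ge0 (w1 t)).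
split; apply Cnorm2_eq0; lra.
Qed.

Lemma local_bound m c1 c2 mu1 mu2 w w1 w2 t0 : sol (Qf m c1 c2 mu1 mu2) w w1 w2 -> 0 < t0 ->
  exists B, forall t, 0 < t <= t0 -> Cnorm2 (w t) <= B.
Proof.
intros H Ht0.
set (L := 1 + ((Rabs c1 + Rabs c2) * t0 ^ m + Rabs mu1 + Rabs mu2)).
exists (En w w1 t0 * exp (L * t0 - L * 0)).
intros t Ht.
pose proof (gron_bwd (En w w1) (dEn w w1 w2) (fun x => L * x) (fun _ => L) t t0 ltac:(lra)) as G.
assert (En w w1 t <= En w w1 t0 * exp (L * t0 - L * t)).
{ apply G. intros x Hx. destruct (En_deriv _ _ _ _ x H ltac:(lra)) as [D B]. split; [exact D|split].
  + apply is_derive_lin.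
  + pose proof (Qf_bound m c1 c2 mu1 mu2 x t0 ltac:(lra)). pose proof (En_nonneg w w1 x).
    apply (bound_help _ _ _ L) in B; [tauto|unfold L; lra|auto]. }
assert (0 <= L) by (unfold L; pose proof (Rabs_pos c1); pose proof (Rabs_pos c2); pose proof (Rabs_pos mu1); pose proof (Rabs_pos mu2); pose proof (pow_le t0 m ltac:(lra)); pose proof (Rmult_le_pos (Rabs c1 + Rabs c2) (t0 ^ m) ltac:(lra) ltac:(lra)); lra).
assert (exp (L * t0 - L * t) <= exp (L * t0 - L * 0)).
{ apply exp_mono. assert (0 <= L * t) by (apply Rmult_le_pos; lra). lra. }
pose proof (En_nonneg w w1 t0). pose proof (Cnorm2_ge0 (w1 t)).
assert (En w w1 t0 * exp (L * t0 - L * t) <= En w w1 t0 * exp (L * t0 - L * 0)) by (apply Rmult_le_compat_l; lra).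
unfold En in *. lra.
Qed.

Definition comb (al be : Cx) (v w : R -> Cx) : R -> Cx := fun t => Cadd (Cmul al (v t)) (Cmul be (w t)).

Lemma d_lin4 (f1 f2 g1 g2 : R -> R) df1 df2 dg1 dg2 a1 a2 b1 b2 t :
  is_derive f1 t df1 -> is_derive f2 t df2 -> is_derive g1 t dg1 -> is_derive g2 t dg2 ->
  is_derive (fun s => a1 * f1 s - a2 * f2 s + (b1 * g1 s - b2 * g2 s)) t (a1 * df1 - a2 * df2 + (b1 * dg1 - b2 * dg2)) /\
  is_derive (fun s => a1 * f2 s + a2 * f1 s + (b1 * g2 s + b2 * g1 s)) t (a1 * df2 + a2 * df1 + (b1 * dg2 + b2 * dg1)).
Proof.
intros H1 H2 H3 H4. split; auto_derive; try (repeat split; eexists; eassumption); dsub; ring.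
Qed.

Lemma derivC_comb al be (v v1 w w1 : R -> Cx) t : derivC v v1 t -> derivC w w1 t ->
  derivC (comb al be v w) (comb al be v1 w1) t.
Proof.
intros Hv Hw. apply derivC_iff in Hv. apply derivC_iff in Hw. apply derivC_iff.
destruct Hv as [A B]; destruct Hw as [C D].
destruct (d_lin4 _ _ _ _ _ _ _ _ (fst al) (snd al) (fst be) (snd be) t A B C D) as [E F].
unfold comb, Cadd, Cmul, Cre, Cim. cbn [fst snd]. split; assumption.
Qed.

Lemma sol_comb Q al be v v1 v2 w w1 w2 : sol Q v v1 v2 -> sol Q w w1 w2 ->
  sol Q (comb al be v w) (comb al be v1 w1) (comb al be v2 w2).
Proof.
intros Hv Hw t Ht. destruct (Hv t Ht) as [A1 [A2 A3]]. destruct (Hw t Ht) as [B1 [B2 B3]].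
split; [apply derivC_comb; auto|split; [apply derivC_comb; auto|]].
unfold comb. rewrite A3, B3. destruct al, be, (Q t), (v t), (w t).
unfold Cadd, Cmul, Cre, Cim; cbn [fst snd]. f_equal; ring.
Qed.

Definition Wr (v v1 w w1 : R -> Cx) t := Cadd (Cmul (v t) (w1 t)) (Copp (Cmul (v1 t) (w t))).

Lemma d_prod4 (A B C D E F G H : R -> R) dA dB dC dD dE dF dG dH t :
  is_derive A t dA -> is_derive B t dB -> is_derive C t dC -> is_derive D t dD ->
  is_derive E t dE -> is_derive F t dF -> is_derive G t dG -> is_derive H t dH ->
  is_derive (fun s => A s * B s - C s * D s + - (E s * F s - G s * H s)) t
    (dA * B t + A t * dB - (dC * D t + C t * dD) - (dE * F t + E t * dF - (dG * H t + G t * dH))) /\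
  is_derive (fun s => A s * D s + C s * B s + - (E s * H s + G s * F s)) t
    (dA * D t + A t * dD + (dC * B t + C t * dB) - (dE * H t + E t * dH + (dG * F t + G t * dF))).
Proof.
intros. split; auto_derive; try (repeat split; eexists; eassumption); dsub; ring.
Qed.

Lemma const_of_d0 (f : R -> R) a b : a <= b -> (forall x, a <= x <= b -> is_derive f x 0) -> f a = f b.
Proof.
intros Hab H.
assert (f a <= f b) by (apply (incr_of_deriv f (fun _ => 0)); auto; intros; split; [apply H; auto|lra]).
assert (- f a <= - f b).
{ apply (incr_of_deriv (fun x => - f x) (fun _ => 0)); auto. intros x Hx; split; [|lra].
  eapply is_derive_eq. apply @is_derive_opp. apply H; auto. hsg. ring. }
lra.
Qed.

Lemma Wr_deriv Q v v1 v2 w w1 w2 t : sol Q v v1 v2 -> sol Q w w1 w2 -> 0 < t ->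
  is_derive (fun s => fst (Wr v v1 w w1 s)) t 0 /\ is_derive (fun s => snd (Wr v v1 w w1 s)) t 0.
Proof.
intros Hv Hw Ht.
destruct (sol_d _ _ _ _ t Hv Ht) as [A1 [A2 [A3 A4]]].
destruct (sol_d _ _ _ _ t Hw Ht) as [B1 [B2 [B3 B4]]].
destruct (d_prod4 (fun s => fst (v s)) (fun s => fst (w1 s)) (fun s => snd (v s)) (fun s => snd (w1 s))
  (fun s => fst (v1 s)) (fun s => fst (w s)) (fun s => snd (v1 s)) (fun s => snd (w s)) _ _ _ _ _ _ _ _ t
  A1 B3 A2 B4 A3 B1 A4 B2) as [D1 D2].
unfold Wr, Cadd, Copp, Cmul, Cre, Cim; cbn [fst snd].
split; eapply is_derive_eq; try eassumption; lazymatch goal with |- @eq _ ?a ?b => change (@eq R a b) end; ring.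
Qed.

Lemma Wr_const Q v v1 v2 w w1 w2 s t : sol Q v v1 v2 -> sol Q w w1 w2 -> 0 < s -> 0 < t ->
  Wr v v1 w w1 s = Wr v v1 w w1 t.
Proof.
intros Hv Hw Hs Ht.
assert (K : forall a b, 0 < a -> a <= b -> Wr v v1 w w1 a = Wr v v1 w w1 b).
{ intros a b Ha Hab.
  assert (E1 : fst (Wr v v1 w w1 a) = fst (Wr v v1 w w1 b)).
  { apply (const_of_d0 (fun s => fst (Wr v v1 w w1 s)) a b Hab).
    intros x Hx. exact (proj1 (Wr_deriv Q v v1 v2 w w1 w2 x Hv Hw ltac:(lra))). }
  assert (E2 : snd (Wr v v1 w w1 a) = snd (Wr v v1 w w1 b)).
  { apply (const_of_d0 (fun s => snd (Wr v v1 w w1 s)) a b Hab).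
    intros x Hx. exact (proj2 (Wr_deriv Q v v1 v2 w w1 w2 x Hv Hw ltac:(lra))). }
  destruct (Wr v v1 w w1 a), (Wr v v1 w w1 b). cbn in E1, E2. subst. reflexivity. }
destruct (Rle_dec s t). apply K; auto. symmetry; apply K; lra.
Qed.


Lemma dF_LC (u1 u2 p1 p2 r al : R -> R) du1 du2 dp1 dp2 dr dal t :
  is_derive u1 t du1 -> is_derive u2 t du2 -> is_derive p1 t dp1 -> is_derive p2 t dp2 ->
  is_derive r t dr -> is_derive al t dal -> r t <> 0 ->
  is_derive (fun s => (p1 s * p1 s + p2 s * p2 s) / r s + r s * (u1 s * u1 s + u2 s * u2 s) + al s * (u1 s * p1 s + u2 s * p2 s)) t
   ((2 * (p1 t * dp1 + p2 t * dp2)) / r t - (p1 t * p1 t + p2 t * p2 t) * dr / (r t * r t)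
    + dr * (u1 t * u1 t + u2 t * u2 t) + r t * (2 * (u1 t * du1 + u2 t * du2))
    + dal * (u1 t * p1 t + u2 t * p2 t) + al t * (du1 * p1 t + u1 t * dp1 + du2 * p2 t + u2 t * dp2)).
Proof.
intros H1 H2 H3 H4 H5 H6 Hr. auto_derive.
- repeat split; try (eexists; eassumption). exact Hr.
- dsub. field. exact Hr.
Qed.

Lemma d_sqrt_pow m t : 0 < t ->
  is_derive (fun s => sqrt (s ^ S m)) t (INR (S m) / 2 * sqrt (t ^ S m) / t).
Proof.
intros Ht. assert (0 < t ^ S m) by (apply pow_lt; lra).
auto_derive. lra.
assert (sqrt (t ^ S m) * sqrt (t ^ S m) = t ^ S m) by (apply sqrt_sqrt; lra).
assert (0 < sqrt (t ^ S m)) by (apply sqrt_lt_R0; lra).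
replace (t ^ m) with (t ^ S m / t) by (change (t ^ S m) with (t * t ^ m); field; lra).
change (match m with 0%nat => 1 | S _ => INR m + 1 end) with (INR (S m)).
set (X := sqrt (t ^ S m)) in *. rewrite <- H0. field. lra.

Qed.

Lemma d_al (r : R -> R) dr K t : is_derive r t dr -> t <> 0 -> r t <> 0 ->
  is_derive (fun s => K / (s * r s)) t (- K * (r t + t * dr) / ((t * r t) * (t * r t))).
Proof.
intros H Ht Hr. auto_derive.
- repeat split; try (eexists; eassumption); try apply Rmult_integral_contrapositive; auto.
- dsub. field. auto.
Qed.

Lemma d_invsqrt C t : 0 < t -> is_derive (fun s => - (4 * C) / sqrt s) t (2 * C / (t * sqrt t)).
Proof.
intros Ht. assert (0 < sqrt t) by (apply sqrt_lt_R0; lra).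
auto_derive. split; [lra|split; auto; lra].
assert (sqrt t * sqrt t = t) by (apply sqrt_sqrt; lra).
rewrite H0. field. lra.
Qed.

Lemma amgm_r r a b c d : 0 < r -> 2 * Rabs (a * b + c * d) <= (b * b + d * d) / r + r * (a * a + c * c).
Proof.
intros Hr.
assert (r * (2 * Rabs (a * b + c * d)) <= (b * b + d * d) + r * r * (a * a + c * c)).
{ pose proof (abs22 (r * a) b (r * c) d).
  replace (2 * (r * a * b + r * c * d)) with (r * (2 * (a * b + c * d))) in H by ring.
  rewrite !Rabs_mult, (Rabs_right r), (Rabs_right 2) in H by lra.
  replace (r * a * (r * a) + b * b + r * c * (r * c) + d * d) with (b * b + d * d + r * r * (a * a + c * c)) in H by ring.
  lra. }
apply (Rmult_le_reg_l r); auto.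
replace (r * ((b * b + d * d) / r + r * (a * a + c * c))) with ((b * b + d * d) + r * r * (a * a + c * c)) by (field; lra).
lra.
Qed.

Lemma sqrt_pow_ge k t : (2 <= k)%nat -> 1 <= t -> t * sqrt t <= sqrt (t ^ S k).
Proof.
intros Hk Ht.
assert (t * sqrt t = sqrt (t ^ 3)).
{ replace (t ^ 3) with ((t * t) * t) by ring. rewrite sqrt_mult by nra. rewrite sqrt_square by lra. reflexivity. }
rewrite H. apply sqrt_le_1_alt. replace (S k) with (3 + (k - 2))%nat by lia.
rewrite pow_add. assert (1 <= t ^ (k-2)) by (apply pow_R1_Rle; lra).
assert (0 <= t ^ 3) by (apply pow_le; lra). nra.
Qed.

Lemma LC_ident u1 u2 p1 p2 r t K mu1 mu2 : t <> 0 -> r <> 0 ->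
  (2 * (p1 * ((-1 * (r * r) + mu1) * u1 - (0 * (r * r) + mu2) * u2) + p2 * ((-1 * (r * r) + mu1) * u2 + (0 * (r * r) + mu2) * u1))) / r
  - (p1 * p1 + p2 * p2) * (K * r / t) / (r * r) + (K * r / t) * (u1 * u1 + u2 * u2) + r * (2 * (u1 * p1 + u2 * p2))
  + (- K * (r + t * (K * r / t)) / ((t * r) * (t * r))) * (u1 * p1 + u2 * p2)
  + K / (t * r) * (p1 * p1 + u1 * ((-1 * (r * r) + mu1) * u1 - (0 * (r * r) + mu2) * u2) + p2 * p2 + u2 * ((-1 * (r * r) + mu1) * u2 + (0 * (r * r) + mu2) * u1))
  = 2 * mu1 * (u1 * p1 + u2 * p2) / r - 2 * mu2 * (u2 * p1 - u1 * p2) / r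
    + (- K * (r + t * (K * r / t)) / ((t * r) * (t * r))) * (u1 * p1 + u2 * p2) + K / (t * r) * mu1 * (u1 * u1 + u2 * u2).
Proof. intros. field. auto. Qed.

Lemma LC_bound r al dal D mu1 mu2 u1 u2 p1 p2 : 1 <= r -> 0 <= al <= 1/2 -> Rabs dal <= D / r ->
  let S := u1 * u1 + u2 * u2 in let T := p1 * p1 + p2 * p2 in
  let X := u1 * p1 + u2 * p2 in let Z := u2 * p1 - u1 * p2 in
  let F := T / r + r * S + al * X in
  let dF := 2 * mu1 * X / r - 2 * mu2 * Z / r + dal * X + al * mu1 * S in
  0 <= F /\ S <= 2 * F / r /\ dF <= 2 * (Rabs mu1 + Rabs mu2 + D / 2 + Rabs mu1 / 2) / r * F.
Proof.
intros Hr Hal Hdal S T X Z F dF.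
assert (Hr0 : 0 < r) by lra.
set (G := T / r + r * S).
assert (HX : 2 * Rabs X <= G) by (apply amgm_r; auto).
assert (HZ : 2 * Rabs Z <= G).
{ unfold Z, G, T, S. pose proof (amgm_r r u2 p1 (- u1) p2 Hr0).
  replace (u2 * p1 + - u1 * p2) with (u2 * p1 - u1 * p2) in H by ring.
  replace (u2 * u2 + - u1 * - u1) with (u1 * u1 + u2 * u2) in H by ring. lra. }
assert (HS0 : 0 <= S) by (unfold S; nra). assert (HT0 : 0 <= T) by (unfold T; nra).
assert (HTr : 0 <= T / r) by (apply Rdiv_le_0_compat; lra).
assert (HG0 : 0 <= G) by (unfold G; nra).
assert (HSG : S <= G / r).
{ unfold G. apply (Rmult_le_reg_l r); auto. replace (r * ((T / r + r * S) / r)) with (T / r + r * S) by (field; lra).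
  nra. }
assert (HaX : Rabs (al * X) <= G / 4).
{ rewrite Rabs_mult, (Rabs_right al) by lra. pose proof (Rabs_pos X). nra. }
assert (HF : G / 2 <= F).
{ unfold F. fold G. pose proof (Rle_abs (- (al * X))). rewrite Rabs_Ropp in H. lra. }
split; [lra|split].
- apply Rle_trans with (G / r); auto. apply Rmult_le_compat_r; [left; apply Rinv_0_lt_compat; lra| lra].
- set (C0 := Rabs mu1 + Rabs mu2 + D / 2 + Rabs mu1 / 2).
  assert (HdF : dF <= C0 * G / r).
  { unfold dF.
    assert (E1 : 2 * mu1 * X / r <= Rabs mu1 * G / r).
    { unfold Rdiv. apply Rmult_le_compat_r. left; apply Rinv_0_lt_compat; lra.
      pose proof (Rle_abs (mu1 * X)). rewrite Rabs_mult in H. pose proof (Rabs_pos mu1). nra. }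
    assert (E2 : - (2 * mu2 * Z / r) <= Rabs mu2 * G / r).
    { unfold Rdiv. replace (- (2 * mu2 * Z * / r)) with (2 * (- mu2 * Z) * / r) by ring.
      apply Rmult_le_compat_r. left; apply Rinv_0_lt_compat; lra.
      pose proof (Rle_abs (- mu2 * Z)). rewrite Rabs_mult, Rabs_Ropp in H. pose proof (Rabs_pos mu2). nra. }
    assert (E3 : dal * X <= D / r * (G / 2)).
    { pose proof (Rle_abs (dal * X)). rewrite Rabs_mult in H. pose proof (Rabs_pos X). pose proof (Rabs_pos dal).
      assert (Rabs dal * Rabs X <= D / r * Rabs X) by (apply Rmult_le_compat_r; auto).
      assert (0 <= D / r) by lra. nra. }
    assert (E4 : al * mu1 * S <= Rabs mu1 / 2 * (G / r)).
    { pose proof (Rle_abs mu1). pose proof (Rabs_pos mu1).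
      assert (al * mu1 <= Rabs mu1 / 2).
      { destruct (Rle_dec 0 mu1). rewrite Rabs_right by lra. nra. rewrite Rabs_left by lra. nra. }
      assert (al * mu1 * S <= Rabs mu1 / 2 * S) by (apply Rmult_le_compat_r; auto).
      assert (Rabs mu1 / 2 * S <= Rabs mu1 / 2 * (G / r)) by (apply Rmult_le_compat_l; lra).
      lra. }
    unfold C0. replace ((Rabs mu1 + Rabs mu2 + D / 2 + Rabs mu1 / 2) * G / r)
      with (Rabs mu1 * G / r + Rabs mu2 * G / r + D / r * (G / 2) + Rabs mu1 / 2 * (G / r)) by (field; lra).
    lra. }
  assert (HC0 : 0 <= C0).
  { unfold C0. pose proof (Rabs_pos mu1). pose proof (Rabs_pos mu2). pose proof (Rabs_pos dal).
    assert (0 <= D / r) by lra. assert (0 <= D) by (apply (Rmult_le_reg_r (/ r)); [apply Rinv_0_lt_compat; lra|]; unfold Rdiv in *; lra). lra. }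
  apply Rle_trans with (C0 * G / r); auto.
  unfold Rdiv. replace (2 * C0 * / r * F) with (C0 * (2 * F) * / r) by ring.
  apply Rmult_le_compat_r. left; apply Rinv_0_lt_compat; lra. apply Rmult_le_compat_l; lra.
Qed.

Lemma LC_core k mu1 mu2 w w1 w2 : (2 <= k)%nat -> sol (Qf (S k) (-1) 0 mu1 mu2) w w1 w2 -> L2_on Rpos w.
Proof.
intros Hk Hs.
set (K := INR (S k) / 2).
set (t0 := INR (S k)).
assert (Ht0 : 3 <= t0).
{ unfold t0. replace 3 with (INR 3) by (simpl; ring). apply le_INR. lia. }
set (r := fun t => sqrt (t ^ S k)).
set (al := fun t => K / (t * r t)).
set (dal := fun t => - K * (r t + t * (K * r t / t)) / ((t * r t) * (t * r t))).
set (F := fun t => (fst (w1 t) * fst (w1 t) + snd (w1 t) * snd (w1 t)) / r t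
   + r t * (fst (w t) * fst (w t) + snd (w t) * snd (w t)) + al t * (fst (w t) * fst (w1 t) + snd (w t) * snd (w1 t))).
set (dF := fun t => 2 * mu1 * (fst (w t) * fst (w1 t) + snd (w t) * snd (w1 t)) / r t
   - 2 * mu2 * (snd (w t) * fst (w1 t) - fst (w t) * snd (w1 t)) / r t
   + dal t * (fst (w t) * fst (w1 t) + snd (w t) * snd (w1 t)) + al t * mu1 * (fst (w t) * fst (w t) + snd (w t) * snd (w t))).
set (D := K * (1 + K)).
set (C0 := Rabs mu1 + Rabs mu2 + D / 2 + Rabs mu1 / 2).
assert (HK : 0 < K) by (unfold K; pose proof (lt_0_INR (S k) ltac:(lia)); lra).
assert (HC0 : 0 <= C0) by (unfold C0, D; pose proof (Rabs_pos mu1); pose proof (Rabs_pos mu2); nra).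
assert (Hr : forall t, 1 <= t -> 1 <= t * sqrt t <= r t).
{ intros t Ht. split.
  - assert (1 <= sqrt t) by (rewrite <- sqrt_1; apply sqrt_le_1_alt; lra). nra.
  - apply sqrt_pow_ge; auto. }
assert (Hder : forall t, 0 < t -> is_derive F t (dF t)).
{ intros t Ht. destruct (sol_d _ _ _ _ t Hs Ht) as [A1 [A2 [A3 A4]]].
  assert (Hrt : 0 < r t) by (apply sqrt_lt_R0; apply pow_lt; lra).
  pose proof (d_sqrt_pow k t Ht) as Dr. fold r in Dr.
  pose proof (d_al r _ K t Dr ltac:(lra) ltac:(lra)) as Da.
  eapply is_derive_eq.
  - apply (dF_LC (fun s => fst (w s)) (fun s => snd (w s)) (fun s => fst (w1 s)) (fun s => snd (w1 s)) r al); eauto. lra.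
  - unfold dF, dal, al. unfold Qf; cbn [fst snd].
    assert (E : t ^ S k = r t * r t) by (unfold r; rewrite sqrt_sqrt; auto; apply pow_le; lra).
    change (sqrt (t ^ S k)) with (r t). rewrite E. fold K.
    replace (INR (S k) / 2 * r t / t) with (K * r t / t) by (unfold K; field; lra).
    apply LC_ident; lra. }
assert (Hb : forall t, t0 <= t -> 0 <= F t /\ fst (w t) * fst (w t) + snd (w t) * snd (w t) <= 2 * F t / r t /\
                                 dF t <= 2 * C0 / (t * sqrt t) * F t).
{ intros t Ht. destruct (Hr t ltac:(lra)) as [Hr1 Hr2].
  assert (Hrt : 1 <= r t) by lra.
  assert (Hal : 0 <= al t <= 1/2).
  { unfold al. split. apply Rdiv_le_0_compat; nra.
    apply (Rmult_le_reg_l (t * r t)). nra. field_simplify; try nra. unfold t0, K in *. nra. }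
  assert (Hdal : Rabs (dal t) <= D / r t).
  { unfold dal. replace (- K * (r t + t * (K * r t / t)) / (t * r t * (t * r t))) with (- (D / r t / (t * t))) by (unfold D; field; nra).
    rewrite Rabs_Ropp. rewrite Rabs_right.
    - unfold Rdiv at 1. rewrite <- (Rmult_1_r (D / r t)) at 2. unfold Rdiv. 
      assert (0 <= D * / r t) by (unfold D; apply Rmult_le_pos; [nra|left; apply Rinv_0_lt_compat; lra]).
      apply Rmult_le_compat_l; auto. rewrite <- Rinv_1. apply Rinv_le_contravar; nra.
    - apply Rle_ge. unfold D. apply Rdiv_le_0_compat; [apply Rdiv_le_0_compat; nra|nra]. }
  destruct (LC_bound (r t) (al t) (dal t) D mu1 mu2 (fst (w t)) (snd (w t)) (fst (w1 t)) (snd (w1 t)) Hrt Hal Hdal) as [B1 [B2 B3]].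
  fold C0 in B3. split; [exact B1|split; [exact B2|]].
  apply Rle_trans with (2 * C0 / r t * F t); [exact B3|].
  apply Rmult_le_compat_r; [exact B1|]. unfold Rdiv. apply Rmult_le_compat_l; [lra|].
  apply Rinv_le_contravar; lra. }
set (H := fun t => - (4 * C0) / sqrt t).
set (B := F t0 * exp (- H t0)).
assert (HB : forall t, t0 <= t -> F t <= B).
{ intros t Ht.
  assert (G : F t <= F t0 * exp (H t - H t0)).
  { apply (gron_gen F dF H (fun t => 2 * C0 / (t * sqrt t))); auto.
    intros x Hx. split; [apply Hder; lra|split]. apply d_invsqrt; lra. apply Hb; lra. }
  assert (H t <= 0). { unfold H. assert (0 < sqrt t) by (apply sqrt_lt_R0; lra).
    unfold Rdiv. assert (0 < / sqrt t) by (apply Rinv_0_lt_compat; lra). nra. }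
  assert (exp (H t - H t0) <= exp (- H t0)) by (apply exp_mono; lra).
  destruct (Hb t0 (Rle_refl _)) as [F0 _].
  unfold B. apply Rle_trans with (1 := G). apply Rmult_le_compat_l; auto. }
assert (HB0 : 0 <= B) by (unfold B; destruct (Hb t0 (Rle_refl _)); pose proof (exp_pos (- H t0)); nra).
assert (HS : forall t, t0 <= t -> Cnorm2 (w t) <= 2 * B / (t * sqrt t)).
{ intros t Ht. destruct (Hb t Ht) as [_ [B2 _]]. destruct (Hr t ltac:(lra)) as [Hr1 Hr2].
  unfold Cnorm2, Cre, Cim. apply Rle_trans with (1 := B2).
  unfold Rdiv. apply Rle_trans with (2 * B * / r t).
  - apply Rmult_le_compat_r. left; apply Rinv_0_lt_compat; lra. pose proof (HB t Ht). lra.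
  - apply Rmult_le_compat_l. lra. apply Rinv_le_contravar; lra. }
destruct (local_bound _ _ _ _ _ _ _ _ t0 Hs ltac:(lra)) as [Bl HBl].
apply (L2_from w t0 Bl (4 * B)); auto; try lra.
- exact (sol_contP _ _ _ _ Hs).
- intros a b Ha Hab.
  apply Rle_trans with ((fun t => - (4 * B) / sqrt t) b - (fun t => - (4 * B) / sqrt t) a).
  + apply (RInt_le_prim (fun s => Cnorm2 (w s)) (fun t => - (4 * B) / sqrt t) (fun t => 2 * B / (t * sqrt t)) a b (a / 2) (b + 1)); try lra.
    * intros x Hx. apply (sol_contP _ _ _ _ Hs). lra.
    * intros x Hx. split. apply d_invsqrt. lra. apply HS. lra.
  + cbv beta. assert (1 <= sqrt a) by (rewrite <- sqrt_1; apply sqrt_le_1_alt; lra).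
    assert (0 < sqrt b) by (apply sqrt_lt_R0; lra).
    assert (0 <= 4 * B / sqrt b) by (apply Rdiv_le_0_compat; lra).
    assert (4 * B / sqrt a <= 4 * B).
    { unfold Rdiv. rewrite <- (Rmult_1_r (4 * B)) at 2. apply Rmult_le_compat_l. lra.
      rewrite <- Rinv_1. apply Rinv_le_contravar; lra. }
    unfold Rdiv in *. lra.
Qed.


Lemma pick_adh (x : nat -> R) l : ValAdh x l -> forall (N k : nat), {p : nat | (N <= p)%nat /\ Rabs (x p - l) < / (INR k + 1)}.
Proof.
intros H N k. apply constructive_indefinite_description.
assert (Hk : 0 < / (INR k + 1)) by (apply Rinv_0_lt_compat; pose proof (pos_INR k); lra).
destruct (H (disc l (mkposreal _ Hk)) N) as [p [Hp1 Hp2]].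
- exists (mkposreal _ Hk). intros y Hy. exact Hy.
- exists p. split; auto.
Qed.

Lemma subseq1 (x : nat -> R) : (forall n, -1 <= x n <= 1) ->
  exists phi : nat -> nat, (forall n, (phi n < phi (S n))%nat) /\ exists l, Un_cv (fun n => x (phi n)) l.
Proof.
intros Hb.
destruct (Bolzano_Weierstrass x (fun c => -1 <= c <= 1) (compact_P3 (-1) 1) Hb) as [l Hl].
set (pk := pick_adh x l Hl).
set (phi := fix phi (n : nat) : nat := match n with O => proj1_sig (pk O O) | S n' => proj1_sig (pk (S (phi n')) n) end).
exists phi. split.
- intros n. change (phi (S n)) with (proj1_sig (pk (S (phi n)) (S n))).
  destruct (proj2_sig (pk (S (phi n)) (S n))) as [Hp _]. lia.
- exists l. intros eps Heps.
  destruct (archimed (/ eps)) as [Ha _].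
  assert (Hz : (0 <= up (/ eps))%Z).
  { apply le_IZR. pose proof (Rinv_0_lt_compat eps Heps). lra. }
  exists (Z.to_nat (up (/ eps))). intros n Hn. unfold Rdist.
  assert (Hphi : Rabs (x (phi n) - l) < / (INR n + 1)).
  { destruct n. exact (proj2 (proj2_sig (pk 0%nat 0%nat))).
    change (phi (S n)) with (proj1_sig (pk (S (phi n)) (S n))). exact (proj2 (proj2_sig (pk (S (phi n)) (S n)))). }
  apply Rlt_le_trans with (1 := Hphi).
  assert (INR (Z.to_nat (up (/ eps))) <= INR n) by (apply le_INR; lia).
  rewrite INR_IZR_INZ, Z2Nat.id in H by auto.
  assert (/ eps < INR n + 1) by lra.
  apply Rle_trans with (/ / eps). apply Rinv_le_contravar. apply Rinv_0_lt_compat; lra. lra.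
  rewrite Rinv_inv. lra.
Qed.

Lemma incr_ge (phi : nat -> nat) : (forall n, (phi n < phi (S n))%nat) -> forall n, (n <= phi n)%nat.
Proof. intros H n. induction n. lia. specialize (H n). lia. Qed.

Lemma incr_mono (phi : nat -> nat) : (forall n, (phi n < phi (S n))%nat) -> forall n m, (n <= m)%nat -> (phi n <= phi m)%nat.
Proof. intros H n m Hnm. induction Hnm. lia. specialize (H m). lia. Qed.

Lemma cv_subseq (x : nat -> R) l (psi : nat -> nat) : (forall n, (psi n < psi (S n))%nat) ->
  Un_cv x l -> Un_cv (fun n => x (psi n)) l.
Proof.
intros Hp H eps Heps. destruct (H eps Heps) as [N HN]. exists N. intros n Hn.
apply HN. pose proof (incr_ge psi Hp n). lia.
Qed.

Lemma subseq4 (a b c d : nat -> R) :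
  (forall n, -1 <= a n <= 1) -> (forall n, -1 <= b n <= 1) -> (forall n, -1 <= c n <= 1) -> (forall n, -1 <= d n <= 1) ->
  exists phi : nat -> nat, (forall n, (phi n < phi (S n))%nat) /\
   exists la lb lc ld, Un_cv (fun n => a (phi n)) la /\ Un_cv (fun n => b (phi n)) lb /\
                       Un_cv (fun n => c (phi n)) lc /\ Un_cv (fun n => d (phi n)) ld.
Proof.
intros Ha Hb Hc Hd.
destruct (subseq1 a Ha) as [p1 [Hp1 [la La]]].
destruct (subseq1 (fun n => b (p1 n)) (fun n => Hb _)) as [p2 [Hp2 [lb Lb]]].
destruct (subseq1 (fun n => c (p1 (p2 n))) (fun n => Hc _)) as [p3 [Hp3 [lc Lc]]].
destruct (subseq1 (fun n => d (p1 (p2 (p3 n)))) (fun n => Hd _)) as [p4 [Hp4 [ld Ld]]].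
assert (Inc : forall (f g : nat -> nat), (forall n, (f n < f (S n))%nat) -> (forall n, (g n < g (S n))%nat) ->
   forall n, (f (g n) < f (g (S n)))%nat).
{ intros f g Hf Hg n. assert (HH := incr_mono f Hf (S (g n)) (g (S n)) (Hg n)). specialize (Hf (g n)). lia. }
pose proof (Inc p3 p4 Hp3 Hp4) as I1.
pose proof (Inc p2 (fun n => p3 (p4 n)) Hp2 I1) as I2.
pose proof (Inc p1 (fun n => p2 (p3 (p4 n))) Hp1 I2) as I3.
exists (fun n => p1 (p2 (p3 (p4 n)))). split; [exact I3|].
exists la, lb, lc, ld. split; [|split; [|split]].
- exact (cv_subseq (fun n => a (p1 n)) la (fun n => p2 (p3 (p4 n))) I2 La).
- exact (cv_subseq (fun n => b (p1 (p2 n))) lb (fun n => p3 (p4 n)) I1 Lb).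
- exact (cv_subseq (fun n => c (p1 (p2 (p3 n)))) lc p4 Hp4 Lc).
- exact Ld.
Qed.

Lemma cv_le0 (x : nat -> R) l N : Un_cv x l -> (forall n, (N <= n)%nat -> x n <= 0) -> l <= 0.
Proof.
intros H Hx. destruct (Rle_dec l 0) as [|Hl]; auto. exfalso.
destruct (H (l / 2) ltac:(lra)) as [M HM].
specialize (HM (max N M) ltac:(lia)). specialize (Hx (max N M) ltac:(lia)).
unfold Rdist in HM. apply Rabs_def2 in HM. lra.
Qed.


Definition Fz z1 z2 (w w1 : R -> Cx) t :=
  z1 * (fst (w t) * fst (w1 t) + snd (w t) * snd (w1 t)) - z2 * (fst (w t) * snd (w1 t) - snd (w t) * fst (w1 t)).

Definition dFz z1 z2 (Q w w1 : R -> Cx) t :=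
  z1 * (fst (w1 t) * fst (w1 t) + snd (w1 t) * snd (w1 t)) +
  (z1 * fst (Q t) - z2 * snd (Q t)) * (fst (w t) * fst (w t) + snd (w t) * snd (w t)).

Lemma d_Fz (u1 u2 p1 p2 : R -> R) du1 du2 dp1 dp2 z1 z2 t :
  is_derive u1 t du1 -> is_derive u2 t du2 -> is_derive p1 t dp1 -> is_derive p2 t dp2 ->
  is_derive (fun s => z1 * (u1 s * p1 s + u2 s * p2 s) - z2 * (u1 s * p2 s - u2 s * p1 s)) t
   (z1 * (du1 * p1 t + u1 t * dp1 + (du2 * p2 t + u2 t * dp2)) - z2 * (du1 * p2 t + u1 t * dp2 - (du2 * p1 t + u2 t * dp1))).
Proof. intros. auto_derive; try (repeat split; eexists; eassumption). dsub. ring. Qed.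

Lemma Fz_deriv Q w w1 w2 z1 z2 t : sol Q w w1 w2 -> 0 < t -> is_derive (Fz z1 z2 w w1) t (dFz z1 z2 Q w w1 t).
Proof.
intros H Ht. destruct (sol_d _ _ _ _ t H Ht) as [A1 [A2 [A3 A4]]].
eapply is_derive_eq. apply (d_Fz _ _ _ _ _ _ _ _ z1 z2 t A1 A2 A3 A4).
unfold dFz. Rring.
Qed.

Section LP.
Variables (m : nat) (c1 c2 mu1 mu2 z1 z2 t0 dl : R).
Let Q := Qf m c1 c2 mu1 mu2.
Hypothesis Ht0 : 1 <= t0.
Hypothesis Hdl : 0 < dl.
Hypothesis Hq : forall t, t0 <= t -> dl <= z1 /\ dl <= z1 * fst (Q t) - z2 * snd (Q t).

Lemma dFz_ge w w1 t : t0 <= t -> dl * (Cnorm2 (w1 t) + Cnorm2 (w t)) <= dFz z1 z2 Q w w1 t.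
Proof.
intros Ht. destruct (Hq t Ht) as [H1 H2]. unfold dFz, Cnorm2, Cre, Cim.
set (T := fst (w1 t) * fst (w1 t) + snd (w1 t) * snd (w1 t)).
set (S := fst (w t) * fst (w t) + snd (w t) * snd (w t)).
assert (0 <= T) by (unfold T; nra). assert (0 <= S) by (unfold S; nra).
assert (dl * T <= z1 * T) by (apply Rmult_le_compat_r; auto).
assert (dl * S <= (z1 * fst (Q t) - z2 * snd (Q t)) * S) by (apply Rmult_le_compat_r; auto).
lra.
Qed.

Lemma LP_mono w w1 w2 s t : sol Q w w1 w2 -> t0 <= s -> s <= t -> Fz z1 z2 w w1 s <= Fz z1 z2 w w1 t.
Proof.
intros H Hs Hst. apply (incr_of_deriv _ (dFz z1 z2 Q w w1)); auto.
intros x Hx. split. apply (Fz_deriv Q w w1 w2); auto; lra.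
pose proof (dFz_ge w w1 x ltac:(lra)). pose proof (Cnorm2_ge0 (w1 x)). pose proof (Cnorm2_ge0 (w x)). nra.
Qed.

Lemma LP_L2 w w1 w2 : sol Q w w1 w2 -> (forall t, t0 <= t -> Fz z1 z2 w w1 t <= 0) -> L2_on Rpos w.
Proof.
intros H Hneg.
destruct (local_bound _ _ _ _ _ _ _ _ t0 H ltac:(lra)) as [Bl HBl].
apply (L2_from w t0 Bl (- Fz z1 z2 w w1 t0 / dl)); auto; try lra.
- exact (sol_contP _ _ _ _ H).
- intros a b Ha Hab.
  apply Rle_trans with ((fun t => Fz z1 z2 w w1 t / dl) b - (fun t => Fz z1 z2 w w1 t / dl) a).
  + apply (RInt_le_prim (fun s => Cnorm2 (w s)) (fun t => Fz z1 z2 w w1 t / dl) (fun t => dFz z1 z2 Q w w1 t / dl) a b (a / 2) (b + 1)); try lra.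
    * intros x Hx. apply (sol_contP _ _ _ _ H). lra.
    * intros x Hx. split.
      -- eapply is_derive_eq. apply (@is_derive_scal_l R_AbsRing R_NormedModule (Fz z1 z2 w w1) x (dFz z1 z2 Q w w1 x) (/ dl)).
         ++ apply (Fz_deriv Q w w1 w2); auto; lra.
         ++ hsg. unfold Rdiv. ring.
      -- pose proof (dFz_ge w w1 x ltac:(lra)). pose proof (Cnorm2_ge0 (w1 x)).
         apply (Rmult_le_reg_l dl); auto. replace (dl * (dFz z1 z2 Q w w1 x / dl)) with (dFz z1 z2 Q w w1 x) by (field; lra). nra.
  + cbv beta. pose proof (Hneg b ltac:(lra)). pose proof (LP_mono w w1 w2 t0 a H ltac:(lra) Ha).
    unfold Rdiv. assert (0 < / dl) by (apply Rinv_0_lt_compat; lra). nra.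
Qed.

Lemma d_H (F : R -> R) dF k t : is_derive F t dF -> F t <> 0 ->
  is_derive (fun s => k * (2 * s + 1 / F s)) t (k * (2 - dF / (F t * F t))).
Proof. intros H HF. auto_derive. split; [eexists; eassumption|split; auto]. dsub. field. auto. Qed.

Lemma LP_NL w w1 w2 t1 : sol Q w w1 w2 -> t0 <= t1 -> 0 < Fz z1 z2 w w1 t1 -> ~ L2_on Rpos w.
Proof.
intros H Ht1 HF1.
destruct (Hq t0 (Rle_refl _)) as [Hz1 _].
set (n := z1 * z1 + z2 * z2). assert (Hn : 0 < n) by (unfold n; nra).
set (k := dl / n). assert (Hk : 0 < k) by (unfold k; apply Rdiv_lt_0_compat; lra).
set (F := Fz z1 z2 w w1).
assert (HFp : forall t, t1 <= t -> 0 < F t).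
{ intros t Ht. pose proof (LP_mono w w1 w2 t1 t H Ht1 Ht). unfold F. lra. }
apply (not_L2 w t1 (fun s => k * (2 * s + 1 / F s)) (fun t => k * (2 - dFz z1 z2 Q w w1 t / (F t * F t)))); try lra.
- exact (sol_contP _ _ _ _ H).
- intros t Ht. split.
  + apply d_H. apply (Fz_deriv Q w w1 w2 z1 z2 t H); lra. pose proof (HFp t Ht); lra.
  + pose proof (HFp t Ht) as Fp. pose proof (dFz_ge w w1 t ltac:(lra)) as Dg.
    unfold Cnorm2, Cre, Cim in *.
    set (d := dFz z1 z2 Q w w1 t) in *.
    set (S := fst (w t) * fst (w t) + snd (w t) * snd (w t)) in *.
    set (T := fst (w1 t) * fst (w1 t) + snd (w1 t) * snd (w1 t)) in *.
    assert (HS : 0 <= S) by (unfold S; nra). assert (HT : 0 <= T) by (unfold T; nra).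
    assert (CS : F t * F t <= n * (S * T)).
    { unfold F, Fz, n, S, T.
      set (X := fst (w t) * fst (w1 t) + snd (w t) * snd (w1 t)).
      set (Y := fst (w t) * snd (w1 t) - snd (w t) * fst (w1 t)).
      assert (E : (fst (w t) * fst (w t) + snd (w t) * snd (w t)) * (fst (w1 t) * fst (w1 t) + snd (w1 t) * snd (w1 t)) = X * X + Y * Y) by (unfold X, Y; ring).
      rewrite E. pose proof (pow2_ge_0 (z1 * Y + z2 * X)). nra. }
    assert (HFF : 0 < F t * F t) by nra.
    assert (HST : 0 < S * T) by nra.
    assert (HT0 : 0 < T) by (destruct (Rle_lt_or_eq_dec _ _ HT); auto; rewrite <- e in HST; lra).
    assert (Hd : 0 < d) by nra.
    assert (Hkey : k * (F t * F t) <= S * d).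
    { unfold k. apply (Rmult_le_reg_l n); auto. replace (n * (dl / n * (F t * F t))) with (dl * (F t * F t)) by (field; lra).
      assert (0 <= dl * S) by (apply Rmult_le_pos; lra).
      assert (dl * T <= d) by lra. assert (n * S * (dl * T) <= n * S * d) by (apply Rmult_le_compat_l; [apply Rmult_le_pos; lra | lra]).
      assert (dl * (F t * F t) <= dl * (n * (S * T))) by (apply Rmult_le_compat_l; lra).
      replace (n * (S * d)) with (n * S * d) by ring. replace (dl * (n * (S * T))) with (n * S * (dl * T)) in H1 by ring. lra. }
    set (a := F t * F t / d).
    assert (Ha : 0 < a) by (unfold a; apply Rdiv_lt_0_compat; lra).
    assert (Hama : 2 <= a + / a).
    { apply (Rmult_le_reg_l a); auto. replace (a * (a + / a)) with (a * a + 1) by (field; lra). pose proof (pow2_ge_0 (a - 1)). nra. }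
    assert (E1 : d / (F t * F t) = / a) by (unfold a; field; split; lra).
    rewrite E1.
    assert (HSa : k * a <= S).
    { unfold a. apply (Rmult_le_reg_r d); auto. replace (k * (F t * F t / d) * d) with (k * (F t * F t)) by (field; lra). lra. }
    assert (k * (2 - / a) <= k * a) by (apply Rmult_le_compat_l; lra). lra.
- intros M. set (X := t1 + (Rabs M + k / F t1) / (2 * k) + 1).
  assert (Hkf : 0 < k / F t1) by (apply Rdiv_lt_0_compat; auto; apply HFp; lra).
  assert (HX : t1 <= X).
  { unfold X. assert (0 <= (Rabs M + k / F t1) / (2 * k)) by (apply Rdiv_le_0_compat; pose proof (Rabs_pos M); lra). lra. }
  exists X. split; auto.
  assert (0 < 1 / F X) by (apply Rdiv_lt_0_compat; [lra|apply HFp; auto]).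
  pose proof (HFp t1 (Rle_refl _)) as HF1'. pose proof (HFp X HX) as HFX.
  set (fx := F X) in *. set (f1 := F t1) in *.
  assert (E : k * (2 * X + 1 / fx) - k * (2 * t1 + 1 / f1) = Rabs M + 2 * k + k * (1 / fx))
    by (unfold X; field; repeat split; lra).
  rewrite E. pose proof (Rle_abs M). assert (0 < k * (1 / fx)) by (apply Rmult_lt_0_compat; lra). lra.
Qed.
End LP.


Definition Cinv (z : Cx) : Cx := (fst z / Cnorm2 z, - snd z / Cnorm2 z).

Lemma Cnorm2_neq0 z : z <> (0,0) -> Cnorm2 z <> 0.
Proof. intros H E. apply H. apply Cnorm2_eq0; auto. Qed.

Lemma solve2 (V V1 Wv W1 D0 D1 : Cx) :
  Cadd (Cmul V W1) (Copp (Cmul V1 Wv)) <> (0,0) ->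
  let Dt := Cadd (Cmul V W1) (Copp (Cmul V1 Wv)) in
  let al := Cmul (Cadd (Cmul D0 W1) (Copp (Cmul D1 Wv))) (Cinv Dt) in
  let be := Cmul (Cadd (Cmul D1 V) (Copp (Cmul D0 V1))) (Cinv Dt) in
  Cadd (Cmul al V) (Cmul be Wv) = D0 /\ Cadd (Cmul al V1) (Cmul be W1) = D1.
Proof.
intros HD Dt al be. pose proof (Cnorm2_neq0 _ HD) as HN. fold Dt in HN.
unfold al, be, Cinv. set (n := Cnorm2 Dt) in *.
assert (En : n = Cnorm2 Dt) by reflexivity. clearbody n. unfold Dt in En.
destruct V as [v1 v2], V1 as [p1 p2], Wv as [w1 w2], W1 as [q1 q2], D0 as [d1 d2], D1 as [e1 e2].
unfold Dt, Cadd, Copp, Cmul, Cnorm2, Cre, Cim in *. cbn [fst snd] in *.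
split; f_equal; field_simplify; auto; rewrite En; field; auto; rewrite <- En; auto.
Qed.

Lemma solve2e (V V1 Wv W1 D0 D1 : Cx) :
  Cadd (Cmul V W1) (Copp (Cmul V1 Wv)) <> (0,0) ->
  exists al be, Cadd (Cmul al V) (Cmul be Wv) = D0 /\ Cadd (Cmul al V1) (Cmul be W1) = D1.
Proof. intros H. destruct (solve2 V V1 Wv W1 D0 D1 H) as [A B]. eexists; eexists; split; [exact A|exact B]. Qed.

Lemma ratio_lemma (V V1 Wv W1 : Cx) : Wv <> (0,0) ->
  Cadd (Cmul V W1) (Copp (Cmul V1 Wv)) = (0,0) ->
  Cadd (Cmul (1,0) V) (Cmul (Copp (Cmul V (Cinv Wv))) Wv) = (0,0) /\
  Cadd (Cmul (1,0) V1) (Cmul (Copp (Cmul V (Cinv Wv))) W1) = (0,0).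
Proof.
intros HW HD. pose proof (Cnorm2_neq0 _ HW) as HN.
set (n := Cnorm2 Wv) in *. assert (En : n = Cnorm2 Wv) by reflexivity. clearbody n.
destruct V as [v1 v2], V1 as [p1 p2], Wv as [w1 w2], W1 as [q1 q2].
unfold Cinv, Cadd, Copp, Cmul, Cnorm2, Cre, Cim in *. cbn [fst snd] in *.
injection HD as HD1 HD2.
rewrite En in HN. clear En n.
split; f_equal.
- field; auto.
- field; auto.
- transitivity (- ((v1 * q1 - v2 * q2 + - (p1 * w1 - p2 * w2)) * w1 + (v1 * q2 + v2 * q1 + - (p1 * w2 + p2 * w1)) * w2) / (w1 * w1 + w2 * w2)).
  field; auto. rewrite HD1, HD2. field; auto.
- transitivity (- ((v1 * q2 + v2 * q1 + - (p1 * w2 + p2 * w1)) * w1 - (v1 * q1 - v2 * q2 + - (p1 * w1 - p2 * w2)) * w2) / (w1 * w1 + w2 * w2)).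
  field; auto. rewrite HD1, HD2. field; auto.
Qed.

Lemma cv_const (c : R) : Un_cv (fun _ => c) c.
Proof. intros eps He. exists O. intros. unfold Rdist. rewrite Rminus_diag, Rabs_R0. lra. Qed.

Lemma cv_opp' (An : nat -> R) l : Un_cv An l -> Un_cv (fun i => - An i) (- l).
Proof. intros H. exact (CV_opp An l H). Qed.

Ltac cvtac := repeat (first [ assumption | apply cv_const | apply CV_minus | apply CV_plus | apply CV_mult | apply cv_opp' ]).

Lemma cv_Fz z1 z2 (y1 y2 y1p y2p : R -> Cx) (a1 a2 b1 b2 : nat -> R) la lb lc ld t :
  Un_cv a1 la -> Un_cv a2 lb -> Un_cv b1 lc -> Un_cv b2 ld ->
  Un_cv (fun k => Fz z1 z2 (comb (a1 k, a2 k) (b1 k, b2 k) y1 y2) (comb (a1 k, a2 k) (b1 k, b2 k) y1p y2p) t)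
        (Fz z1 z2 (comb (la, lb) (lc, ld) y1 y2) (comb (la, lb) (lc, ld) y1p y2p) t).
Proof.
intros A1 A2 B1 B2. unfold Fz, comb, Cadd, Cmul, Cre, Cim. cbn [fst snd]. cvtac.
Qed.

Lemma comb_zero (Y1 P1 Y2 P2 a b : Cx) :
  Cadd (Cmul Y1 P2) (Copp (Cmul P1 Y2)) = (1,0) -> Cadd (Cmul a Y1) (Cmul b Y2) = (0,0) ->
  Cadd (Cmul a P1) (Cmul b P2) = (0,0) -> a = (0,0) /\ b = (0,0).
Proof.
destruct Y1 as [y11 y12], P1 as [p11 p12], Y2 as [y21 y22], P2 as [p21 p22], a as [a1 a2], b as [b1 b2].
unfold Cadd, Cmul, Copp, Cre, Cim; cbn [fst snd].
intros W E F. injection W as W1 W2. injection E as E1 E2. injection F as F1 F2.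
assert (HA1 : a1 = a1 * (y11 * p21 - y12 * p22 + - (p11 * y21 - p12 * y22)) - a2 * (y11 * p22 + y12 * p21 + - (p11 * y22 + p12 * y21))) by (rewrite W1, W2; ring).
assert (HA2 : a2 = a1 * (y11 * p22 + y12 * p21 + - (p11 * y22 + p12 * y21)) + a2 * (y11 * p21 - y12 * p22 + - (p11 * y21 - p12 * y22))) by (rewrite W1, W2; ring).
assert (HB1 : b1 = b1 * (y11 * p21 - y12 * p22 + - (p11 * y21 - p12 * y22)) - b2 * (y11 * p22 + y12 * p21 + - (p11 * y22 + p12 * y21))) by (rewrite W1, W2; ring).
assert (HB2 : b2 = b1 * (y11 * p22 + y12 * p21 + - (p11 * y22 + p12 * y21)) + b2 * (y11 * p21 - y12 * p22 + - (p11 * y21 - p12 * y22))) by (rewrite W1, W2; ring).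
assert (GA1 : a1 * (y11 * p21 - y12 * p22 + - (p11 * y21 - p12 * y22)) - a2 * (y11 * p22 + y12 * p21 + - (p11 * y22 + p12 * y21)) = p21 * (a1 * y11 - a2 * y12 + (b1 * y21 - b2 * y22)) - p22 * (a1 * y12 + a2 * y11 + (b1 * y22 + b2 * y21)) - (y21 * (a1 * p11 - a2 * p12 + (b1 * p21 - b2 * p22)) - y22 * (a1 * p12 + a2 * p11 + (b1 * p22 + b2 * p21)))) by ring.
assert (GA2 : a1 * (y11 * p22 + y12 * p21 + - (p11 * y22 + p12 * y21)) + a2 * (y11 * p21 - y12 * p22 + - (p11 * y21 - p12 * y22)) = p21 * (a1 * y12 + a2 * y11 + (b1 * y22 + b2 * y21)) + p22 * (a1 * y11 - a2 * y12 + (b1 * y21 - b2 * y22)) - (y21 * (a1 * p12 + a2 * p11 + (b1 * p22 + b2 * p21)) + y22 * (a1 * p11 - a2 * p12 + (b1 * p21 - b2 * p22)))) by ring.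
assert (GB1 : b1 * (y11 * p21 - y12 * p22 + - (p11 * y21 - p12 * y22)) - b2 * (y11 * p22 + y12 * p21 + - (p11 * y22 + p12 * y21)) = y11 * (a1 * p11 - a2 * p12 + (b1 * p21 - b2 * p22)) - y12 * (a1 * p12 + a2 * p11 + (b1 * p22 + b2 * p21)) - (p11 * (a1 * y11 - a2 * y12 + (b1 * y21 - b2 * y22)) - p12 * (a1 * y12 + a2 * y11 + (b1 * y22 + b2 * y21)))) by ring.
assert (GB2 : b1 * (y11 * p22 + y12 * p21 + - (p11 * y22 + p12 * y21)) + b2 * (y11 * p21 - y12 * p22 + - (p11 * y21 - p12 * y22)) = y11 * (a1 * p12 + a2 * p11 + (b1 * p22 + b2 * p21)) + y12 * (a1 * p11 - a2 * p12 + (b1 * p21 - b2 * p22)) - (p11 * (a1 * y12 + a2 * y11 + (b1 * y22 + b2 * y21)) + p12 * (a1 * y11 - a2 * y12 + (b1 * y21 - b2 * y22)))) by ring.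
rewrite E1, E2, F1, F2 in GA1, GA2, GB1, GB2.
split; f_equal; lra.
Qed.

Lemma nat_above (x : R) : exists N : nat, x <= INR N.
Proof.
destruct (archimed x) as [H _]. destruct (Z_le_gt_dec 0 (up x)).
- exists (Z.to_nat (up x)). rewrite INR_IZR_INZ, Z2Nat.id by auto. lra.
- exists O. simpl. apply Z.gt_lt in g. apply IZR_lt in g. lra.
Qed.

Lemma bnd_div x S : x * x <= S -> 0 < S -> -1 <= x / sqrt S <= 1.
Proof.
intros H HS. assert (Hs : 0 < sqrt S) by (apply sqrt_lt_R0; auto).
assert (Rabs x <= sqrt S).
{ rewrite <- sqrt_Rsqr_abs. apply sqrt_le_1_alt. unfold Rsqr. lra. }
apply Rabs_le_between in H0. split.
- apply (Rmult_le_reg_r (sqrt S)); auto. unfold Rdiv. rewrite Rmult_assoc, Rinv_l, Rmult_1_r; lra.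
- apply (Rmult_le_reg_r (sqrt S)); auto. unfold Rdiv. rewrite Rmult_assoc, Rinv_l, Rmult_1_r; lra.
Qed.

Lemma Fz_data z1 z2 (u u1 : R -> Cx) t0 : u t0 = (1,0) -> u1 t0 = (z1, -z2) -> Fz z1 z2 u u1 t0 = z1 * z1 + z2 * z2.
Proof. intros E1 E2. unfold Fz. rewrite E1, E2. cbn [fst snd]. ring. Qed.

Lemma comb0_eq c (v w : Cx) : Cadd (Cmul (1,0) v) (Cmul (Copp c) w) = (0,0) -> v = Cmul c w.
Proof.
destruct c as [a b], v as [x y], w as [p q]. unfold Cadd, Cmul, Copp, Cre, Cim; cbn [fst snd].
intros E. injection E as E1 E2. f_equal; lra.
Qed.

Section LPA.
Variables (y1 y1p y1pp y2 y2p y2pp : R -> Cx).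
Variables (m : nat) (c1 c2 mu1 mu2 z1 z2 t0 dl : R).
Let Q := Qf m c1 c2 mu1 mu2.
Hypothesis Ht0 : 1 <= t0.
Hypothesis Hdl : 0 < dl.
Hypothesis Hq : forall t, t0 <= t -> dl <= z1 /\ dl <= z1 * fst (Q t) - z2 * snd (Q t).

Let NL := LP_NL m c1 c2 mu1 mu2 z1 z2 t0 dl Ht0 Hdl Hq.
Let L2p := LP_L2 m c1 c2 mu1 mu2 z1 z2 t0 dl Ht0 Hdl Hq.
Let mono := LP_mono m c1 c2 mu1 mu2 z1 z2 t0 dl Ht0 Hdl Hq.

Lemma z1pos : 0 < z1.
Proof. destruct (Hq t0 (Rle_refl _)). lra. Qed.

Lemma LPA_unique v v1 v2 w w1 w2 : sol Q v v1 v2 -> sol Q w w1 w2 -> L2_on Rpos v -> L2_on Rpos w ->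
  (exists x, 0 < x /\ w x <> (0,0)) -> exists c, forall x, 0 < x -> v x = Cmul c (w x).
Proof.
intros Hv Hw Lv Lw [x1 [Hx1 Hwx]].
assert (W0 : Wr v v1 w w1 t0 = (0,0)).
{ destruct (Req_dec (fst (Wr v v1 w w1 t0)) 0) as [E1|E1];
  [destruct (Req_dec (snd (Wr v v1 w w1 t0)) 0) as [E2|E2]|].
  - rewrite (surjective_pairing (Wr v v1 w w1 t0)), E1, E2. reflexivity.
  - exfalso. assert (HD : Wr v v1 w w1 t0 <> (0,0)) by (intros E; rewrite E in E2; apply E2; reflexivity).
    unfold Wr in HD.
    destruct (solve2e (v t0) (v1 t0) (w t0) (w1 t0) (1,0) (z1, -z2) HD) as [al [be [S1 S2]]].
    apply (NL (comb al be v w) (comb al be v1 w1) (comb al be v2 w2) t0).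
    + apply sol_comb; auto.
    + lra.
    + rewrite (Fz_data z1 z2 (comb al be v w) (comb al be v1 w1) t0 S1 S2). pose proof z1pos. nra.
    + apply L2_comb; auto. exact (sol_contP _ _ _ _ Hv). exact (sol_contP _ _ _ _ Hw).
  - exfalso. assert (HD : Wr v v1 w w1 t0 <> (0,0)) by (intros E; rewrite E in E1; apply E1; reflexivity).
    unfold Wr in HD.
    destruct (solve2e (v t0) (v1 t0) (w t0) (w1 t0) (1,0) (z1, -z2) HD) as [al [be [S1 S2]]].
    apply (NL (comb al be v w) (comb al be v1 w1) (comb al be v2 w2) t0).
    + apply sol_comb; auto.
    + lra.
    + rewrite (Fz_data z1 z2 (comb al be v w) (comb al be v1 w1) t0 S1 S2). pose proof z1pos. nra.
    + apply L2_comb; auto. exact (sol_contP _ _ _ _ Hv). exact (sol_contP _ _ _ _ Hw). }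
assert (W1 : Wr v v1 w w1 x1 = (0,0)) by (rewrite (Wr_const Q v v1 v2 w w1 w2 x1 t0); auto; lra).
unfold Wr in W1.
destruct (ratio_lemma (v x1) (v1 x1) (w x1) (w1 x1) Hwx W1) as [R1 R2].
set (c := Cmul (v x1) (Cinv (w x1))) in R1, R2.
exists c. intros x Hx.
destruct (uniq0 m c1 c2 mu1 mu2 (comb (1,0) (Copp c) v w) (comb (1,0) (Copp c) v1 w1) (comb (1,0) (Copp c) v2 w2) x1
   (sol_comb Q _ _ _ _ _ _ _ _ Hv Hw) Hx1 R1 R2 x Hx) as [U _].
apply comb0_eq. exact U.
Qed.

Hypothesis Hy1 : sol Q y1 y1p y1pp.
Hypothesis Hy2 : sol Q y2 y2p y2pp.
Hypothesis HW : forall t, 0 < t -> Wr y1 y1p y2 y2p t = (1,0).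

Lemma LPA_nonL2 : exists v, solvesQ Q v /\ ~ L2_on Rpos v.
Proof.
assert (HD : Cadd (Cmul (y1 t0) (y2p t0)) (Copp (Cmul (y1p t0) (y2 t0))) <> (0,0)).
{ pose proof (HW t0 ltac:(lra)) as E. unfold Wr in E. rewrite E. intros E'. injection E'. lra. }
destruct (solve2e (y1 t0) (y1p t0) (y2 t0) (y2p t0) (1,0) (z1, -z2) HD) as [al [be [S1 S2]]].
exists (comb al be y1 y2). split.
- exists (comb al be y1p y2p), (comb al be y1pp y2pp). apply sol_comb; auto.
- apply (NL (comb al be y1 y2) (comb al be y1p y2p) (comb al be y1pp y2pp) t0).
  + apply sol_comb; auto.
  + lra.
  + rewrite (Fz_data z1 z2 (comb al be y1 y2) (comb al be y1p y2p) t0 S1 S2). pose proof z1pos. nra.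
Qed.

Lemma LPA_exists : exists w, solvesQ Q w /\ L2_on Rpos w /\ (exists x, 0 < x /\ w x <> (0,0)).
Proof.
set (s := fun n : nat => t0 + INR n).
assert (Hs : forall n, t0 <= s n) by (intros n; unfold s; pose proof (pos_INR n); lra).
set (A := fun n => y2 (s n)). set (B := fun n => Copp (y1 (s n))).
set (N2 := fun n => Cnorm2 (A n) + Cnorm2 (B n)).
assert (HN2 : forall n, 0 < N2 n).
{ intros n. unfold N2. pose proof (Cnorm2_ge0 (A n)). pose proof (Cnorm2_ge0 (B n)).
  destruct (Rle_lt_or_eq_dec 0 (Cnorm2 (A n) + Cnorm2 (B n))) as [|E]; [lra|lra|].
  exfalso. assert (EA : A n = (0,0)) by (apply Cnorm2_eq0; lra).
  assert (EB : B n = (0,0)) by (apply Cnorm2_eq0; lra).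
  pose proof (HW (s n) ltac:(pose proof (Hs n); lra)) as HWn. unfold Wr in HWn.
  unfold A, B in EA, EB. rewrite EA in HWn.
  destruct (y1 (s n)) as [q1 q2]. unfold Copp in EB. cbn [fst snd] in EB. injection EB as EB1 EB2.
  assert (q1 = 0) by lra. assert (q2 = 0) by lra. subst q1 q2.
  unfold Cadd, Cmul, Copp, Cre, Cim in HWn; cbn [fst snd] in HWn. injection HWn as H1 H2. lra. }
set (Nn := fun n => sqrt (N2 n)).
assert (HNn : forall n, 0 < Nn n) by (intros n; apply sqrt_lt_R0; auto).
set (a1 := fun n => fst (A n) / Nn n). set (a2 := fun n => snd (A n) / Nn n).
set (b1 := fun n => fst (B n) / Nn n). set (b2 := fun n => snd (B n) / Nn n).
assert (Bd : forall n, (-1 <= a1 n <= 1) /\ (-1 <= a2 n <= 1) /\ (-1 <= b1 n <= 1) /\ (-1 <= b2 n <= 1)).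
{ intros n. pose proof (HN2 n) as P. unfold a1, a2, b1, b2, Nn.
  unfold N2, Cnorm2, Cre, Cim in *.
  set (x1 := fst (A n)) in *. set (x2 := snd (A n)) in *. set (x3 := fst (B n)) in *. set (x4 := snd (B n)) in *.
  assert (0 <= x1 * x1) by nra. assert (0 <= x2 * x2) by nra. assert (0 <= x3 * x3) by nra. assert (0 <= x4 * x4) by nra.
  repeat split; try (apply bnd_div; auto; lra). }
assert (Nm : forall n, a1 n * a1 n + a2 n * a2 n + (b1 n * b1 n + b2 n * b2 n) = 1).
{ intros n. pose proof (HN2 n) as P. pose proof (sqrt_sqrt (N2 n) ltac:(lra)) as SS.
  unfold a1, a2, b1, b2. fold (Nn n) in SS.
  replace (fst (A n) / Nn n * (fst (A n) / Nn n) + snd (A n) / Nn n * (snd (A n) / Nn n) +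
     (fst (B n) / Nn n * (fst (B n) / Nn n) + snd (B n) / Nn n * (snd (B n) / Nn n)))
   with (N2 n / (Nn n * Nn n)) by (unfold N2, Cnorm2, Cre, Cim; field; pose proof (HNn n); lra).
  rewrite SS. field. lra. }
set (U := fun n => comb (a1 n, a2 n) (b1 n, b2 n) y1 y2).
set (U1 := fun n => comb (a1 n, a2 n) (b1 n, b2 n) y1p y2p).
set (U2 := fun n => comb (a1 n, a2 n) (b1 n, b2 n) y1pp y2pp).
assert (SU : forall n, sol Q (U n) (U1 n) (U2 n)) by (intros n; apply sol_comb; auto).
assert (Key : forall n t, t0 <= t <= s n -> Fz z1 z2 (U n) (U1 n) t <= 0).
{ intros n t Ht.
  assert (Z0 : U n (s n) = (0,0)).
  { unfold U, comb, a1, a2, b1, b2, A, B. destruct (y1 (s n)) as [q1 q2], (y2 (s n)) as [r1 r2].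
    unfold Cadd, Cmul, Copp, Cre, Cim; cbn [fst snd]. f_equal; field; pose proof (HNn n); lra. }
  assert (F0 : Fz z1 z2 (U n) (U1 n) (s n) = 0) by (unfold Fz; rewrite Z0; cbn [fst snd]; ring).
  rewrite <- F0. apply (mono (U n) (U1 n) (U2 n)); auto; lra. }
destruct (subseq4 a1 a2 b1 b2 (fun n => proj1 (Bd n)) (fun n => proj1 (proj2 (Bd n)))
   (fun n => proj1 (proj2 (proj2 (Bd n)))) (fun n => proj2 (proj2 (proj2 (Bd n))))) as [phi [Hphi [la [lb [lc [ld [C1 [C2 [C3 C4]]]]]]]]].
set (u := comb (la, lb) (lc, ld) y1 y2).
set (u1 := comb (la, lb) (lc, ld) y1p y2p).
set (u2 := comb (la, lb) (lc, ld) y1pp y2pp).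
assert (Su : sol Q u u1 u2) by (apply sol_comb; auto).
exists u. split; [exists u1, u2; exact Su|split].
- apply (L2p u u1 u2 Su). intros t Ht.
  destruct (nat_above (t - t0)) as [Nk HNk].
  apply (cv_le0 _ _ Nk (cv_Fz z1 z2 y1 y2 y1p y2p (fun k => a1 (phi k)) (fun k => a2 (phi k)) (fun k => b1 (phi k)) (fun k => b2 (phi k)) la lb lc ld t C1 C2 C3 C4)).
  intros k Hk. apply (Key (phi k) t). split; auto.
  unfold s. pose proof (incr_ge phi Hphi k). assert (INR Nk <= INR (phi k)) by (apply le_INR; lia). lra.
- assert (Nl : la * la + lb * lb + (lc * lc + ld * ld) = 1).
  { apply (UL_sequence (fun k => a1 (phi k) * a1 (phi k) + a2 (phi k) * a2 (phi k) + (b1 (phi k) * b1 (phi k) + b2 (phi k) * b2 (phi k)))).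
    - cvtac.
    - intros eps He. exists O. intros n _. rewrite Nm. unfold Rdist. rewrite Rminus_diag, Rabs_R0. lra. }
  apply NNPP. intros Hno.
  assert (Z : forall x, 0 < x -> u x = (0,0)).
  { intros x Hx. apply NNPP. intros Hne. apply Hno. exists x. auto. }
  destruct (Su 1 ltac:(lra)) as [D1 _]. apply derivC_iff in D1. destruct D1 as [D1 D2].
  assert (Loc : forall (f : R -> R) l, is_derive f 1 l -> (forall y, 0 < y -> f y = 0) -> l = 0).
  { intros f l Hf Hz.
    assert (Hc : is_derive (fun _ : R => 0) 1 l).
    { apply (is_derive_ext_loc f); auto. apply (locally_interval _ 1 0 p_infty); simpl; try lra; auto. }
    apply is_derive_unique in Hc. rewrite Derive_const in Hc. auto. }
  assert (P1 : fst (u1 1) = 0) by (apply (Loc _ _ D1); intros y Hy; rewrite (Z y Hy); reflexivity).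
  assert (P2 : snd (u1 1) = 0) by (apply (Loc _ _ D2); intros y Hy; rewrite (Z y Hy); reflexivity).
  assert (E1 : u1 1 = (0,0)) by (rewrite (surjective_pairing (u1 1)), P1, P2; reflexivity).
  destruct (comb_zero (y1 1) (y1p 1) (y2 1) (y2p 1) (la, lb) (lc, ld) (HW 1 ltac:(lra)) (Z 1 ltac:(lra)) E1) as [Ea Eb].
  injection Ea as -> ->. injection Eb as -> ->. lra.
Qed.
End LPA.


Definition Cscal (s : R) (z : Cx) : Cx := (s * fst z, s * snd z).
Definition N1 (z : Cx) := Rabs (fst z) + Rabs (snd z).

Section PS.
Variables (m : nat) (c1 c2 mu1 mu2 : R) (A0 A1 : Cx).

Definition step (k : nat) (f : nat -> Cx) : Cx :=
  Cscal (/ (INR (k + 2) * INR (k + 1)))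
    (Cadd (Cmul (mu1, mu2) (f k)) (if (m <=? k)%nat then Cmul (c1, c2) (f (k - m)%nat) else (0,0))).

Fixpoint tab (n : nat) : nat -> Cx :=
  match n with
  | O => fun j => if (j =? 0)%nat then A0 else A1
  | S n' => fun j => if (j <=? S n')%nat then tab n' j else step n' (tab n')
  end.

Definition coef (j : nat) : Cx := tab j j.

Lemma tab_S n j : (j <= S n)%nat -> tab (S n) j = tab n j.
Proof. intros H. simpl. destruct (Nat.leb_spec j (S n)); [reflexivity|lia]. Qed.

Lemma tab_stable n d j : (j <= S n)%nat -> tab (n + d) j = tab n j.
Proof.
intros H. induction d. rewrite Nat.add_0_r. reflexivity.
rewrite Nat.add_succ_r, tab_S by lia. exact IHd.
Qed.

Lemma tab_coef n j : (j <= S n)%nat -> tab n j = coef j.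
Proof.
intros H. unfold coef. destruct (le_lt_dec j n).
- replace n with (j + (n - j))%nat at 1 by lia. rewrite tab_stable by lia. reflexivity.
- assert (j = S n) by lia. subst j. rewrite tab_S by lia. reflexivity.
Qed.

Lemma coef0 : coef 0 = A0.
Proof. reflexivity. Qed.

Lemma coef1 : coef 1 = A1.
Proof. reflexivity. Qed.

Lemma coef_rec k : coef (S (S k)) = step k coef.
Proof.
unfold coef at 1. rewrite tab_S by lia.
change (tab (S k) (S (S k))) with (if (S (S k) <=? S k)%nat then tab k (S (S k)) else step k (tab k)).
rewrite (proj2 (Nat.leb_gt _ _)) by lia.
unfold step. rewrite !(tab_coef k) by lia. reflexivity.
Qed.

Lemma N1_ge0 z : 0 <= N1 z.
Proof. unfold N1. pose proof (Rabs_pos (fst z)). pose proof (Rabs_pos (snd z)). lra. Qed.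

Lemma N1_mul a b : N1 (Cmul a b) <= N1 a * N1 b.
Proof.
destruct a as [a1 a2], b as [b1 b2]. unfold N1, Cmul, Cre, Cim; cbn [fst snd].
pose proof (Rabs_triang (a1 * b1) (- (a2 * b2))). pose proof (Rabs_triang (a1 * b2) (a2 * b1)).
rewrite Rabs_Ropp in H. rewrite !Rabs_mult in *. unfold Rminus.
assert (Rabs a1 * Rabs b1 + Rabs a2 * Rabs b2 + (Rabs a1 * Rabs b2 + Rabs a2 * Rabs b1) = (Rabs a1 + Rabs a2) * (Rabs b1 + Rabs b2)) by ring.
lra.
Qed.

Lemma N1_add a b : N1 (Cadd a b) <= N1 a + N1 b.
Proof.
destruct a as [a1 a2], b as [b1 b2]. unfold N1, Cadd, Cre, Cim; cbn [fst snd].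
pose proof (Rabs_triang a1 b1). pose proof (Rabs_triang a2 b2). lra.
Qed.

Lemma N1_scal s z : N1 (Cscal s z) = Rabs s * N1 z.
Proof. unfold N1, Cscal; cbn [fst snd]. rewrite !Rabs_mult. ring. Qed.

Lemma sum_ge_term (B : nat -> R) j N : (forall n, 0 <= B n) -> (j <= N)%nat -> B j <= sum_f_R0 B N.
Proof.
intros H0 HjN. induction N.
- assert (j = 0%nat) by lia. subst. simpl. lra.
- simpl. destruct (Nat.eq_dec j (S N)).
  + subst. assert (0 <= sum_f_R0 B N) by (apply cond_pos_sum; auto). lra.
  + specialize (IHN ltac:(lia)). specialize (H0 (S N)). lra.
Qed.

Lemma nat_above2 (x : R) : exists N : nat, x <= INR N.
Proof.
destruct (archimed x) as [H _]. destruct (Z_le_gt_dec 0 (up x)).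
- exists (Z.to_nat (up x)). rewrite INR_IZR_INZ, Z2Nat.id by auto. lra.
- exists O. simpl. apply Z.gt_lt in g. apply IZR_lt in g. lra.
Qed.

Lemma coef_bound r : 1 <= r -> exists M, forall n, N1 (coef n) * r ^ n <= M.
Proof.
intros Hr.
set (B := fun n => N1 (coef n) * r ^ n).
assert (HB0 : forall n, 0 <= B n) by (intros n; unfold B; apply Rmult_le_pos; [apply N1_ge0|apply pow_le; lra]).
set (K := N1 (mu1, mu2) + N1 (c1, c2)).
assert (HK : 0 <= K) by (unfold K; pose proof (N1_ge0 (mu1,mu2)); pose proof (N1_ge0 (c1,c2)); lra).
destruct (nat_above2 (K * r ^ (m + 2))) as [k0 Hk0].
set (M := sum_f_R0 B (S k0)).
assert (HM : 0 <= M) by (apply cond_pos_sum; auto).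
exists M.
assert (Main : forall n j, (j <= n)%nat -> B j <= M).
{ induction n; intros j Hj.
  - apply sum_ge_term; auto; lia.
  - destruct (Nat.eq_dec j (S n)); [|apply IHn; lia]. subst j.
    destruct (le_lt_dec (S n) (S k0)); [apply sum_ge_term; auto|].
    destruct n as [|k]; [lia|].
    assert (Hk : (k0 <= k)%nat) by lia.
    unfold B. rewrite coef_rec. unfold step.
    rewrite N1_scal.
    set (den := INR (k + 2) * INR (k + 1)).
    assert (Hden : INR k0 + 1 <= den).
    { unfold den. rewrite !plus_INR. simpl. pose proof (le_INR _ _ Hk). pose proof (pos_INR k). nra. }
    assert (Hden0 : 0 < den) by (pose proof (pos_INR k0); lra).
    rewrite Rabs_right by (apply Rle_ge; left; apply Rinv_0_lt_compat; lra).
    assert (Hr2 : r ^ 2 <= r ^ (m + 2)) by (apply Rle_pow; [lra|lia]).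
    assert (Hrk : r ^ S (S k) = r ^ k * r ^ 2) by (rewrite <- pow_add; f_equal; lia).
    assert (T1 : N1 (Cmul (mu1, mu2) (coef k)) * r ^ S (S k) <= N1 (mu1, mu2) * (M * r ^ (m + 2))).
    { apply Rle_trans with (N1 (mu1, mu2) * N1 (coef k) * r ^ S (S k)).
      apply Rmult_le_compat_r; [apply pow_le; lra|apply N1_mul].
      rewrite Hrk. replace (N1 (mu1, mu2) * N1 (coef k) * (r ^ k * r ^ 2)) with (N1 (mu1, mu2) * (B k * r ^ 2)) by (unfold B; ring).
      apply Rmult_le_compat_l; [apply N1_ge0|]. apply Rmult_le_compat; [apply HB0 | apply pow_le; lra | apply IHn; lia | exact Hr2]. }
    assert (T2 : N1 (if (m <=? k)%nat then Cmul (c1, c2) (coef (k - m)) else (0, 0)) * r ^ S (S k) <= N1 (c1, c2) * (M * r ^ (m + 2))).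
    { destruct (Nat.leb_spec m k).
      - apply Rle_trans with (N1 (c1, c2) * N1 (coef (k - m)) * r ^ S (S k)).
        apply Rmult_le_compat_r; [apply pow_le; lra|apply N1_mul].
        replace (r ^ S (S k)) with (r ^ (k - m) * r ^ (m + 2)) by (rewrite <- pow_add; f_equal; lia).
        replace (N1 (c1, c2) * N1 (coef (k - m)) * (r ^ (k - m) * r ^ (m + 2))) with (N1 (c1, c2) * (B (k - m)%nat * r ^ (m + 2))) by (unfold B; ring).
        apply Rmult_le_compat_l; [apply N1_ge0|]. apply Rmult_le_compat_r. apply pow_le; lra. apply IHn; lia.
      - replace (N1 (0,0)) with 0 by (unfold N1; cbn [fst snd]; rewrite Rabs_R0; ring). rewrite Rmult_0_l.
        apply Rmult_le_pos; [apply N1_ge0|apply Rmult_le_pos; auto; apply pow_le; lra]. }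
    pose proof (N1_add (Cmul (mu1, mu2) (coef k)) (if (m <=? k)%nat then Cmul (c1, c2) (coef (k - m)) else (0, 0))) as Hadd.
    set (X := N1 (Cadd _ _)) in *.
    assert (HX : X * r ^ S (S k) <= K * r ^ (m + 2) * M).
    { apply Rle_trans with ((N1 (Cmul (mu1, mu2) (coef k)) + N1 (if (m <=? k)%nat then Cmul (c1, c2) (coef (k - m)) else (0, 0))) * r ^ S (S k)).
      apply Rmult_le_compat_r; auto. apply pow_le; lra. unfold K. lra. }
    assert (HKM : K * r ^ (m + 2) * M <= INR k0 * M) by (apply Rmult_le_compat_r; auto).
    replace (/ den * X * r ^ S (S k)) with ((X * r ^ S (S k)) / den) by (field; lra).
    apply (Rmult_le_reg_r den); auto. unfold Rdiv. rewrite Rmult_assoc, Rinv_l, Rmult_1_r by lra.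
    assert (INR k0 * M <= M * den) by nra. lra. }
intros n. apply (Main n n). lia.
Qed.
End PS.

Lemma rad_inf (a : nat -> R) : (forall r, 1 <= r -> exists M, forall n, Rabs (a n) * r ^ n <= M) ->
  forall x, Rbar_lt (Rabs x) (CV_radius a).
Proof.
intros H x. set (r := Rabs x + 1). assert (Hr : 1 <= r) by (unfold r; pose proof (Rabs_pos x); lra).
destruct (H r Hr) as [M HM].
destruct (CV_radius_bounded a) as [Hub _].
assert (E : Rbar_le r (CV_radius a)).
{ apply Hub. exists M. intros n. rewrite Rabs_mult, (Rabs_right (r ^ n)) by (apply Rle_ge, pow_le; lra). apply HM. }
apply Rbar_lt_le_trans with r; auto. simpl. unfold r. lra.
Qed.

Lemma fst_N1 z : Rabs (fst z) <= N1 z.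
Proof. unfold N1. pose proof (Rabs_pos (snd z)). lra. Qed.
Lemma snd_N1 z : Rabs (snd z) <= N1 z.
Proof. unfold N1. pose proof (Rabs_pos (fst z)). lra. Qed.

Lemma ex_lin2 (a b : nat -> R) al be x : ex_pseries a x -> ex_pseries b x -> ex_pseries (fun k => al * a k + be * b k) x.
Proof.
intros Ha Hb. apply (ex_pseries_ext (PS_plus (PS_scal al a) (PS_scal be b))).
- intros n. reflexivity.
- apply @ex_pseries_plus; apply @ex_pseries_scal; auto; intros; apply Rmult_comm.
Qed.

Lemma PS_lin2 (a b : nat -> R) al be x : ex_pseries a x -> ex_pseries b x ->
  PSeries (fun k => al * a k + be * b k) x = al * PSeries a x + be * PSeries b x.
Proof.
intros Ha Hb. rewrite (PSeries_ext _ (PS_plus (PS_scal al a) (PS_scal be b))) by (intros; reflexivity).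
rewrite PSeries_plus. rewrite !PSeries_scal. reflexivity.
apply @ex_pseries_scal; auto; intros; apply Rmult_comm.
apply @ex_pseries_scal; auto; intros; apply Rmult_comm.
Qed.

Section Sol.
Variables (m : nat) (c1 c2 mu1 mu2 : R) (A0 A1 : Cx).

Definition ar k := fst (coef m c1 c2 mu1 mu2 A0 A1 k).
Definition ai k := snd (coef m c1 c2 mu1 mu2 A0 A1 k).

Lemma rad_ar x : Rbar_lt (Rabs x) (CV_radius ar).
Proof.
apply rad_inf. intros r Hr. destruct (coef_bound m c1 c2 mu1 mu2 A0 A1 r Hr) as [M HM]. exists M. intros n.
apply Rle_trans with (2 := HM n). apply Rmult_le_compat_r. apply pow_le; lra. apply fst_N1.
Qed.

Lemma rad_ai x : Rbar_lt (Rabs x) (CV_radius ai).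
Proof.
apply rad_inf. intros r Hr. destruct (coef_bound m c1 c2 mu1 mu2 A0 A1 r Hr) as [M HM]. exists M. intros n.
apply Rle_trans with (2 := HM n). apply Rmult_le_compat_r. apply pow_le; lra. apply snd_N1.
Qed.

Lemma INR_step k : INR (S k) * INR (S (S k)) = INR (k + 2) * INR (k + 1).
Proof. rewrite !S_INR, !plus_INR. simpl. ring. Qed.

Lemma cancel_k k X : INR (S k) * (INR (S (S k)) * (/ (INR (k + 2) * INR (k + 1)) * X)) = X.
Proof.
assert (Hd : INR (k + 2) * INR (k + 1) <> 0) by (rewrite !plus_INR; simpl; pose proof (pos_INR k); nra).
rewrite <- Rmult_assoc, INR_step, <- Rmult_assoc, Rinv_r by auto. ring.
Qed.

Lemma dd_ar k : PS_derive (PS_derive ar) k =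
  1 * (mu1 * ar k + - mu2 * ai k) + 1 * (c1 * PS_incr_n ar m k + - c2 * PS_incr_n ai m k).
Proof.
unfold PS_derive. unfold ar at 1. rewrite coef_rec. unfold step, Cscal, Cadd, Cmul, Cre, Cim; cbn [fst snd].
rewrite cancel_k. rewrite !PS_incr_n_simplify.
destruct (le_lt_dec m k); destruct (Nat.leb_spec m k); try lia; cbn [fst snd]; unfold ar, ai; hsg; ring.
Qed.

Lemma dd_ai k : PS_derive (PS_derive ai) k =
  1 * (mu1 * ai k + mu2 * ar k) + 1 * (c1 * PS_incr_n ai m k + c2 * PS_incr_n ar m k).
Proof.
unfold PS_derive. unfold ai at 1. rewrite coef_rec. unfold step, Cscal, Cadd, Cmul, Cre, Cim; cbn [fst snd].
rewrite cancel_k. rewrite !PS_incr_n_simplify.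
destruct (le_lt_dec m k); destruct (Nat.leb_spec m k); try lia; cbn [fst snd]; unfold ar, ai; hsg; ring.
Qed.
End Sol.

Definition sol_all (Q : R -> Cx) (w w1 w2 : R -> Cx) : Prop :=
  forall t, derivC w w1 t /\ derivC w1 w2 t /\ w2 t = Cmul (Q t) (w t).

Section Sol2.
Variables (m : nat) (c1 c2 mu1 mu2 : R) (A0 A1 : Cx).
Let a := ar m c1 c2 mu1 mu2 A0 A1.
Let b := ai m c1 c2 mu1 mu2 A0 A1.

Definition psY t : Cx := (PSeries a t, PSeries b t).
Definition psY1 t : Cx := (PSeries (PS_derive a) t, PSeries (PS_derive b) t).
Definition psY2 t : Cx := (PSeries (PS_derive (PS_derive a)) t, PSeries (PS_derive (PS_derive b)) t).

Lemma psY_sol : sol_all (Qf m c1 c2 mu1 mu2) psY psY1 psY2.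
Proof.
intros t.
assert (Ra : forall x, Rbar_lt (Rabs x) (CV_radius a)) by (intros; apply rad_ar).
assert (Rb : forall x, Rbar_lt (Rabs x) (CV_radius b)) by (intros; apply rad_ai).
assert (Ra' : forall x, Rbar_lt (Rabs x) (CV_radius (PS_derive a))) by (intros; rewrite CV_radius_derive; auto).
assert (Rb' : forall x, Rbar_lt (Rabs x) (CV_radius (PS_derive b))) by (intros; rewrite CV_radius_derive; auto).
split; [|split].
- apply derivC_iff. unfold psY, psY1; cbn [fst snd]. split; apply is_derive_PSeries; auto.
- apply derivC_iff. unfold psY1, psY2; cbn [fst snd]. split; apply is_derive_PSeries; auto.
- assert (Ea : ex_pseries a t) by (apply CV_radius_inside; auto).
  assert (Eb : ex_pseries b t) by (apply CV_radius_inside; auto).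
  assert (Eai : ex_pseries (PS_incr_n a m) t) by (apply @ex_pseries_incr_n; auto).
  assert (Ebi : ex_pseries (PS_incr_n b m) t) by (apply @ex_pseries_incr_n; auto).
  unfold psY, psY2, Qf, Cmul, Cre, Cim; cbn [fst snd]. unfold a, b in *. f_equal.
  + rewrite (PSeries_ext _ _ t (dd_ar m c1 c2 mu1 mu2 A0 A1)).
    rewrite PS_lin2 by (apply ex_lin2; auto). rewrite !PS_lin2 by auto. rewrite !PSeries_incr_n. ring.
  + rewrite (PSeries_ext _ _ t (dd_ai m c1 c2 mu1 mu2 A0 A1)).
    rewrite PS_lin2 by (apply ex_lin2; auto). rewrite !PS_lin2 by auto. rewrite !PSeries_incr_n. ring.
Qed.

Lemma psY_0 : psY 0 = A0.
Proof. unfold psY. rewrite !PSeries_0. unfold a, b, ar, ai. rewrite coef0. destruct A0; reflexivity. Qed.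

Lemma psY1_0 : psY1 0 = A1.
Proof.
unfold psY1. rewrite !PSeries_0. unfold PS_derive, a, b, ar, ai. rewrite coef1. destruct A1. simpl INR. cbn [fst snd].
f_equal; ring.
Qed.
End Sol2.

Lemma sol_d_all Q w w1 w2 t : sol_all Q w w1 w2 ->
  is_derive (fun s => fst (w s)) t (fst (w1 t)) /\ is_derive (fun s => snd (w s)) t (snd (w1 t)) /\
  is_derive (fun s => fst (w1 s)) t (fst (Q t) * fst (w t) - snd (Q t) * snd (w t)) /\
  is_derive (fun s => snd (w1 s)) t (fst (Q t) * snd (w t) + snd (Q t) * fst (w t)).
Proof.
intros H. destruct (H t) as [H1 [H2 H3]].
apply derivC_iff in H1. apply derivC_iff in H2. rewrite H3 in H2.
unfold Cmul, Cre, Cim in H2; simpl in H2. tauto.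
Qed.

Lemma Wr_deriv_all Q v v1 v2 w w1 w2 t : sol_all Q v v1 v2 -> sol_all Q w w1 w2 ->
  is_derive (fun s => fst (Wr v v1 w w1 s)) t 0 /\ is_derive (fun s => snd (Wr v v1 w w1 s)) t 0.
Proof.
intros Hv Hw.
destruct (sol_d_all _ _ _ _ t Hv) as [A1 [A2 [A3 A4]]].
destruct (sol_d_all _ _ _ _ t Hw) as [B1 [B2 [B3 B4]]].
destruct (d_prod4 (fun s => fst (v s)) (fun s => fst (w1 s)) (fun s => snd (v s)) (fun s => snd (w1 s))
  (fun s => fst (v1 s)) (fun s => fst (w s)) (fun s => snd (v1 s)) (fun s => snd (w s)) _ _ _ _ _ _ _ _ t
  A1 B3 A2 B4 A3 B1 A4 B2) as [D1 D2].
unfold Wr, Cadd, Copp, Cmul, Cre, Cim; cbn [fst snd].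
split; eapply is_derive_eq; try eassumption; lazymatch goal with |- @eq _ ?a ?b => change (@eq R a b) end; ring.
Qed.

Lemma Wr_const_all Q v v1 v2 w w1 w2 t : sol_all Q v v1 v2 -> sol_all Q w w1 w2 ->
  Wr v v1 w w1 t = Wr v v1 w w1 0.
Proof.
intros Hv Hw.
assert (K : forall a b, a <= b -> Wr v v1 w w1 a = Wr v v1 w w1 b).
{ intros a b Hab.
  assert (E1 : fst (Wr v v1 w w1 a) = fst (Wr v v1 w w1 b)).
  { apply (const_of_d0 (fun s => fst (Wr v v1 w w1 s)) a b Hab).
    intros x Hx. exact (proj1 (Wr_deriv_all Q v v1 v2 w w1 w2 x Hv Hw)). }
  assert (E2 : snd (Wr v v1 w w1 a) = snd (Wr v v1 w w1 b)).
  { apply (const_of_d0 (fun s => snd (Wr v v1 w w1 s)) a b Hab).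
    intros x Hx. exact (proj2 (Wr_deriv_all Q v v1 v2 w w1 w2 x Hv Hw)). }
  destruct (Wr v v1 w w1 a), (Wr v v1 w w1 b). cbn in E1, E2. subst. reflexivity. }
destruct (Rle_dec t 0). apply K; auto. symmetry; apply K; lra.
Qed.

Lemma fundamental m c1 c2 mu1 mu2 :
  exists y1 y1p y1pp y2 y2p y2pp,
    sol (Qf m c1 c2 mu1 mu2) y1 y1p y1pp /\ sol (Qf m c1 c2 mu1 mu2) y2 y2p y2pp /\
    forall t, 0 < t -> Wr y1 y1p y2 y2p t = (1,0).
Proof.
pose proof (psY_sol m c1 c2 mu1 mu2 (1,0) (0,0)) as S1.
pose proof (psY_sol m c1 c2 mu1 mu2 (0,0) (1,0)) as S2.
exists (psY m c1 c2 mu1 mu2 (1,0) (0,0)), (psY1 m c1 c2 mu1 mu2 (1,0) (0,0)), (psY2 m c1 c2 mu1 mu2 (1,0) (0,0)).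
exists (psY m c1 c2 mu1 mu2 (0,0) (1,0)), (psY1 m c1 c2 mu1 mu2 (0,0) (1,0)), (psY2 m c1 c2 mu1 mu2 (0,0) (1,0)).
split; [intros t _; apply S1|split; [intros t _; apply S2|]].
intros t _. rewrite (Wr_const_all _ _ _ _ _ _ _ t S1 S2).
unfold Wr. rewrite !psY_0, !psY1_0. unfold Cadd, Copp, Cmul, Cre, Cim; cbn [fst snd]. f_equal; ring.
Qed.


Lemma sc1 x : sin x * sin x + cos x * cos x = 1.
Proof. pose proof (sin2_cos2 x). unfold Rsqr in H. lra. Qed.

Lemma de_moivre r al n : Cpow (r * cos al, r * sin al) n = (r ^ n * cos (INR n * al), r ^ n * sin (INR n * al)).
Proof.
induction n.
- simpl. rewrite Rmult_0_l, cos_0, sin_0. f_equal; ring.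
- change (Cpow (r * cos al, r * sin al) (S n)) with (Cmul (r * cos al, r * sin al) (Cpow (r * cos al, r * sin al) n)).
  rewrite IHn. unfold Cmul, Cre, Cim; cbn [fst snd].
  rewrite S_INR. replace ((INR n + 1) * al) with (al + INR n * al) by ring.
  rewrite cos_plus, sin_plus. change (r ^ S n) with (r * r ^ n). f_equal; ring.
Qed.

Lemma Cexpi_mul a b : Cmul (Cexpi a) (Cexpi b) = Cexpi (a + b).
Proof. unfold Cexpi, Cmul, Cre, Cim; cbn [fst snd]. rewrite cos_plus, sin_plus. f_equal; ring. Qed.

Definition Cscal' (s : R) (z : Cx) : Cx := (s * fst z, s * snd z).

Lemma qplus_form N phi t :
  q_plus N phi t = Cscal' (t ^ (N + 2)) (Cexpi (INR (N + 2) * (PI / 2) + INR (N + 2) * phi)).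
Proof.
unfold q_plus.
replace ((0, t) : Cx) with (t * cos (PI / 2), t * sin (PI / 2)) by (rewrite cos_PI2, sin_PI2; f_equal; ring).
rewrite de_moivre.
replace ((t ^ (N + 2) * cos (INR (N + 2) * (PI / 2)), t ^ (N + 2) * sin (INR (N + 2) * (PI / 2))) : Cx)
  with (Cscal' (t ^ (N + 2)) (Cexpi (INR (N + 2) * (PI / 2)))) by reflexivity.
rewrite <- (Cexpi_mul (INR (N + 2) * (PI / 2))).
unfold Cscal', Cmul, Cexpi, Cre, Cim; cbn [fst snd]. f_equal; ring.
Qed.

Lemma qminus_form N phi t :
  q_minus N phi (- t) = Cscal' (t ^ (N + 2)) (Cexpi (INR (N + 2) * (3 * (PI / 2)) - INR (N + 2) * phi)).
Proof.
unfold q_minus.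
replace ((0, - t) : Cx) with (t * cos (3 * (PI / 2)), t * sin (3 * (PI / 2))) by (rewrite cos_3PI2, sin_3PI2; f_equal; ring).
rewrite de_moivre.
replace ((t ^ (N + 2) * cos (INR (N + 2) * (3 * (PI / 2))), t ^ (N + 2) * sin (INR (N + 2) * (3 * (PI / 2)))) : Cx)
  with (Cscal' (t ^ (N + 2)) (Cexpi (INR (N + 2) * (3 * (PI / 2))))) by reflexivity.
replace (INR (N + 2) * (3 * (PI / 2)) - INR (N + 2) * phi) with (INR (N + 2) * (3 * (PI / 2)) + - INR (N + 2) * phi) by ring.
rewrite <- (Cexpi_mul (INR (N + 2) * (3 * (PI / 2)))).
unfold Cscal', Cmul, Cexpi, Cre, Cim; cbn [fst snd]. f_equal; ring.
Qed.

Lemma Qform m be ga (lam : Cx) t :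
  Cmul (Copp (Cexpi be)) (Cadd lam (Cscal' (t ^ m) (Cexpi ga))) =
  Qf m (- cos (be + ga)) (- sin (be + ga)) (fst (Copp (Cmul (Cexpi be) lam))) (snd (Copp (Cmul (Cexpi be) lam))) t.
Proof.
destruct lam as [l1 l2]. unfold Qf, Cscal', Cmul, Copp, Cadd, Cexpi, Cre, Cim; cbn [fst snd].
rewrite cos_plus, sin_plus. f_equal; ring.
Qed.

Lemma ode_iff be (lam qx W W2 : Cx) :
  Cadd (Copp (Cmul (Cexpi (- be)) W2)) (Copp (Cmul qx W)) = Cmul lam W <->
  W2 = Cmul (Cmul (Copp (Cexpi be)) (Cadd lam qx)) W.
Proof.
pose proof (sc1 be) as Hsc.
unfold Cexpi. rewrite cos_neg, sin_neg.
set (k := cos be) in *. set (s := sin be) in *.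
destruct lam as [l1 l2], qx as [q1 q2], W as [x1 x2], W2 as [y1 y2].
unfold Cadd, Copp, Cmul, Cre, Cim; cbn [fst snd].
set (R1 := l1 * x1 - l2 * x2 + (q1 * x1 - q2 * x2)).
set (R2 := l1 * x2 + l2 * x1 + (q1 * x2 + q2 * x1)).
split.
- intros E. injection E as E1 E2.
  assert (F1 : k * y1 + s * y2 = - R1) by (unfold R1; lra).
  assert (F2 : k * y2 - s * y1 = - R2) by (unfold R2; lra).
  assert (G1 : y1 = k * (k * y1 + s * y2) - s * (k * y2 - s * y1)) by (transitivity (y1 * (s * s + k * k)); [rewrite Hsc; ring|ring]).
  assert (G2 : y2 = s * (k * y1 + s * y2) + k * (k * y2 - s * y1)) by (transitivity (y2 * (s * s + k * k)); [rewrite Hsc; ring|ring]).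
  rewrite F1, F2 in G1, G2. f_equal.
  + rewrite G1. unfold R1, R2. ring.
  + rewrite G2. unfold R1, R2. ring.
- intros E. injection E as E1 E2. rewrite E1, E2. f_equal.
  + transitivity ((s * s + k * k) * (l1 * x1 - l2 * x2 + (q1 * x1 - q2 * x2)) - (q1 * x1 - q2 * x2)); [ring|rewrite Hsc; ring].
  + transitivity ((s * s + k * k) * (l1 * x2 + l2 * x1 + (q1 * x2 + q2 * x1)) - (q1 * x2 + q2 * x1)); [ring|rewrite Hsc; ring].
Qed.

Lemma solvesQ_ext (Q1 Q2 : R -> Cx) w : (forall t, Q1 t = Q2 t) -> solvesQ Q1 w -> solvesQ Q2 w.
Proof. intros E [w1 [w2 H]]. exists w1, w2. intros t Ht. rewrite <- E. apply H; auto. Qed.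

Lemma plus_iff N phi lam w :
  solves Rpos (a_plus phi) (q_plus N phi) lam w <->
  solvesQ (fun t => Cmul (Copp (Cexpi (2 * phi))) (Cadd lam (q_plus N phi t))) w.
Proof.
unfold a_plus. replace (-2 * phi) with (- (2 * phi)) by ring.
split; intros [w1 [w2 H]]; exists w1, w2; intros t Ht; destruct (H t Ht) as [A [B C]]; (split; [exact A|split; [exact B|]]).
- exact (proj1 (ode_iff _ _ _ _ _) C).
- exact (proj2 (ode_iff _ _ _ _ _) C).
Qed.

Lemma derivC_refl (f f1 : R -> Cx) t : derivC f f1 (- t) -> derivC (fun s => f (- s)) (fun s => Copp (f1 (- s))) t.
Proof.
intros H. apply derivC_iff in H. destruct H as [H1 H2]. apply derivC_iff. unfold Copp, Cre, Cim; cbn [fst snd].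
split.
- eapply is_derive_eq. apply (is_derive_comp (fun s => fst (f s)) (fun s => - s)). exact H1.
  apply @is_derive_opp. apply @is_derive_id. hsg. ring.
- eapply is_derive_eq. apply (is_derive_comp (fun s => snd (f s)) (fun s => - s)). exact H2.
  apply @is_derive_opp. apply @is_derive_id. hsg. ring.
Qed.

Lemma derivC_refl' (f f1 : R -> Cx) t : derivC f f1 (- t) -> derivC (fun s => Copp (f (- s))) (fun s => f1 (- s)) t.
Proof.
intros H. apply derivC_iff in H. destruct H as [H1 H2]. apply derivC_iff. unfold Copp, Cre, Cim; cbn [fst snd].
split.
- eapply is_derive_eq. apply @is_derive_opp. apply (is_derive_comp (fun s => fst (f s)) (fun s => - s)). exact H1.
  apply @is_derive_opp. apply @is_derive_id. hsg. ring.
- eapply is_derive_eq. apply @is_derive_opp. apply (is_derive_comp (fun s => snd (f s)) (fun s => - s)). exact H2.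
  apply @is_derive_opp. apply @is_derive_id. hsg. ring.
Qed.

Lemma derivC_ext (f g f1 : R -> Cx) t : (forall s, f s = g s) -> derivC f f1 t -> derivC g f1 t.
Proof.
intros E H. apply derivC_iff in H. apply derivC_iff. destruct H as [H1 H2]. split.
- eapply is_derive_ext; [|exact H1]. intros s; simpl; rewrite E; reflexivity.
- eapply is_derive_ext; [|exact H2]. intros s; simpl; rewrite E; reflexivity.
Qed.

Lemma minus_iff N phi lam w :
  solves Rneg (a_minus phi) (q_minus N phi) lam w <->
  solvesQ (fun t => Cmul (Copp (Cexpi (-2 * phi))) (Cadd lam (q_minus N phi (- t)))) (fun t => w (- t)).
Proof.
unfold a_minus. replace (2 * phi) with (- (-2 * phi)) by ring.
split.
- intros [w1 [w2 H]]. exists (fun s => Copp (w1 (- s))), (fun s => w2 (- s)). intros t Ht.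
  destruct (H (- t) ltac:(unfold Rneg; lra)) as [A [B C]]. split; [|split].
  + apply derivC_refl; auto.
  + apply derivC_refl'. exact B.
  + exact (proj1 (ode_iff _ _ _ _ _) C).
- intros [u1 [u2 H]]. exists (fun s => Copp (u1 (- s))), (fun s => u2 (- s)). intros x Hx.
  unfold Rneg in Hx. destruct (H (- x) ltac:(lra)) as [A [B C]]. split; [|split].
  + apply (derivC_ext (fun s => w (- - s))). intros s. rewrite Ropp_involutive; reflexivity.
    apply (derivC_refl (fun s => w (- s))). exact A.
  + apply derivC_refl'. exact B.
  + apply (proj2 (ode_iff _ _ _ _ _)). rewrite Ropp_involutive in C. exact C.
Qed.

Definition limit_pointQ (Q : R -> Cx) : Prop :=
  (exists w, solvesQ Q w /\ L2_on Rpos w /\ (exists x, Rpos x /\ w x <> (0, 0)) /\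
     forall v, solvesQ Q v -> L2_on Rpos v -> exists c : Cx, forall x, Rpos x -> v x = Cmul c (w x)) /\
  (exists v, solvesQ Q v /\ ~ L2_on Rpos v).

Lemma pow_ge_t t m : 1 <= t -> (1 <= m)%nat -> t <= t ^ m.
Proof.
intros Ht Hm. replace m with (S (m - 1)) by lia. change (t ^ S (m - 1)) with (t * t ^ (m - 1)).
assert (1 <= t ^ (m - 1)) by (apply pow_R1_Rle; lra). nra.
Qed.

Lemma LP_Qf m psi mu1 mu2 : (1 <= m)%nat -> cos psi <> 0 ->
  limit_pointQ (Qf m (cos (2 * psi)) (sin (2 * psi)) mu1 mu2).
Proof.
intros Hm Hc.
set (s := if Rlt_dec 0 (cos psi) then 1 else -1).
assert (Hs : 0 < s * cos psi).
{ unfold s. destruct (Rlt_dec 0 (cos psi)); [lra|]. assert (cos psi < 0) by lra. lra. }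
assert (Hs2 : s * s = 1) by (unfold s; destruct (Rlt_dec 0 (cos psi)); ring).
set (z1 := s * cos psi). set (z2 := - s * sin psi).
set (bc := z1 * cos (2 * psi) - z2 * sin (2 * psi)).
assert (Hbc : bc = s * cos psi).
{ unfold bc, z1, z2. rewrite cos_2a, sin_2a. pose proof (sc1 psi).
  transitivity (s * cos psi * (sin psi * sin psi + cos psi * cos psi)); [ring|rewrite H; ring]. }
set (nu := z1 * mu1 - z2 * mu2).
set (dl := Rmin z1 1).
set (t0 := 1 + (1 + Rabs nu) / bc).
assert (Hbc0 : 0 < bc) by (rewrite Hbc; exact Hs).
assert (Ht0 : 1 <= t0) by (unfold t0; assert (0 <= (1 + Rabs nu) / bc) by (apply Rdiv_le_0_compat; pose proof (Rabs_pos nu); lra); lra).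
assert (Hdl : 0 < dl) by (unfold dl; apply Rmin_glb_lt; unfold z1; lra).
assert (Hq : forall t, t0 <= t -> dl <= z1 /\ dl <= z1 * fst (Qf m (cos (2 * psi)) (sin (2 * psi)) mu1 mu2 t) - z2 * snd (Qf m (cos (2 * psi)) (sin (2 * psi)) mu1 mu2 t)).
{ intros t Ht. split. apply Rmin_l.
  unfold Qf; cbn [fst snd].
  replace (z1 * (cos (2 * psi) * t ^ m + mu1) - z2 * (sin (2 * psi) * t ^ m + mu2)) with (bc * t ^ m + nu) by (unfold bc, nu; ring).
  assert (t <= t ^ m) by (apply pow_ge_t; [lra|exact Hm]).
  assert (bc * t <= bc * t ^ m) by (apply Rmult_le_compat_l; lra).
  assert (bc * t0 <= bc * t) by (apply Rmult_le_compat_l; lra).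
  assert (bc * t0 = bc + 1 + Rabs nu) by (unfold t0; field; lra).
  pose proof (Rle_abs (- nu)). rewrite Rabs_Ropp in H3.
  assert (dl <= 1) by apply Rmin_r. lra. }
destruct (fundamental m (cos (2 * psi)) (sin (2 * psi)) mu1 mu2) as [y1 [y1p [y1pp [y2 [y2p [y2pp [Hy1 [Hy2 HW]]]]]]]].
split.
- destruct (LPA_exists y1 y1p y1pp y2 y2p y2pp m _ _ mu1 mu2 z1 z2 t0 dl Ht0 Hdl Hq Hy1 Hy2 HW) as [w [Sw [Lw [x [Hx Hwx]]]]].
  exists w. split; [auto|split; [auto|split]].
  + exists x. split; auto.
  + intros v Sv Lv. destruct Sw as [w1 [w2 Sw]]. destruct Sv as [v1 [v2 Sv]].
    destruct (LPA_unique m _ _ mu1 mu2 z1 z2 t0 dl Ht0 Hdl Hq v v1 v2 w w1 w2 Sv Sw Lv Lw (ex_intro _ x (conj Hx Hwx))) as [c Hc'].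
    exists c. intros y Hy. apply Hc'. exact Hy.
- exact (LPA_nonL2 y1 y1p y1pp y2 y2p y2pp m _ _ mu1 mu2 z1 z2 t0 dl Ht0 Hdl Hq Hy1 Hy2 HW).
Qed.

Lemma LC_Qf k mu1 mu2 w : (2 <= k)%nat -> solvesQ (Qf (S k) (-1) 0 mu1 mu2) w -> L2_on Rpos w.
Proof. intros Hk [w1 [w2 H]]. exact (LC_core k mu1 mu2 w w1 w2 Hk H). Qed.

Lemma transfer_pos a q lam Q : (forall w, solves Rpos a q lam w <-> solvesQ Q w) ->
  limit_pointQ Q -> limit_point Rpos a q lam.
Proof.
intros E [[w [Sw [Lw [Nz U]]]] [v [Sv Lv]]]. split.
- exists w. split; [apply E; auto|split; [auto|split; [auto|]]].
  intros v' Sv' Lv'. apply U; auto. apply E; auto.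
- exists v. split; auto. apply E; auto.
Qed.

Lemma transfer_neg a q lam Q : (forall w, solves Rneg a q lam w <-> solvesQ Q (fun t => w (- t))) ->
  limit_pointQ Q -> limit_point Rneg a q lam.
Proof.
intros E [[w [Sw [Lw [[x0 [Hx0 Hw0]] U]]]] [v [Sv Lv]]].
assert (Inv : forall f : R -> Cx, (fun t => (fun s => f (- s)) (- t)) = f).
{ intros f. apply functional_extensionality. intros t. rewrite Ropp_involutive. reflexivity. }
split.
- exists (fun s => w (- s)). split; [apply E; rewrite Inv; auto|split; [|split]].
  + apply L2_refl. rewrite Inv. auto.
  + exists (- x0). split. unfold Rneg, Rpos in *; lra. rewrite Ropp_involutive. auto.
  + intros v' Sv' Lv'. apply E in Sv'. apply L2_refl in Lv'.
    destruct (U _ Sv' Lv') as [c Hc]. exists c. intros x Hx.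
    specialize (Hc (- x) ltac:(unfold Rneg, Rpos in *; lra)). rewrite Ropp_involutive in Hc. exact Hc.
- exists (fun s => v (- s)). split.
  + apply E. rewrite Inv. auto.
  + intros L. apply L2_refl in L. rewrite Inv in L. auto.
Qed.

Lemma transfer_pos_lc a q lam Q : (forall w, solves Rpos a q lam w <-> solvesQ Q w) ->
  (forall w, solvesQ Q w -> L2_on Rpos w) -> limit_circle Rpos a q lam.
Proof. intros E H w Sw. apply H, E, Sw. Qed.

Lemma transfer_neg_lc a q lam Q : (forall w, solves Rneg a q lam w <-> solvesQ Q (fun t => w (- t))) ->
  (forall w, solvesQ Q w -> L2_on Rpos w) -> limit_circle Rneg a q lam.
Proof. intros E H w Sw. apply L2_refl. apply H, E, Sw. Qed.

Lemma cos_2kPI k : cos (2 * IZR k * PI) = 1 /\ sin (2 * IZR k * PI) = 0.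
Proof.
assert (Hn : forall n : nat, cos (2 * INR n * PI) = 1 /\ sin (2 * INR n * PI) = 0).
{ intros n. pose proof (cos_period 0 n). pose proof (sin_period 0 n).
  rewrite Rplus_0_l in *. rewrite cos_0 in H. rewrite sin_0 in H0. auto. }
destruct k as [|p|p].
- simpl. rewrite Rmult_0_r, Rmult_0_l, cos_0, sin_0. auto.
- replace (IZR (Z.pos p)) with (INR (Pos.to_nat p)) by (rewrite INR_IZR_INZ, positive_nat_Z; reflexivity). apply Hn.
- replace (IZR (Z.neg p)) with (- INR (Pos.to_nat p)) by (rewrite <- Pos2Z.opp_pos, opp_IZR, INR_IZR_INZ, positive_nat_Z; reflexivity).
  replace (2 * - INR (Pos.to_nat p) * PI) with (- (2 * INR (Pos.to_nat p) * PI)) by ring.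
  rewrite cos_neg, sin_neg. destruct (Hn (Pos.to_nat p)) as [A B]. rewrite A, B. split; ring.
Qed.

Lemma INR_N2 N : INR (N + 2) = INR N + 2.
Proof. rewrite plus_INR. simpl. ring. Qed.

Lemma IZR_N2k N k : IZR (Z.of_nat (N + 2) - k) = INR N + 2 - IZR k.
Proof. rewrite minus_IZR, <- INR_IZR_INZ, INR_N2. reflexivity. Qed.

Section Main.
Variables (N : nat) (phi : R) (lam : Cx).
Hypothesis HN : (1 <= N)%nat.

Let m := (N + 2)%nat.
Let mu1p := fst (Copp (Cmul (Cexpi (2 * phi)) lam)).
Let mu2p := snd (Copp (Cmul (Cexpi (2 * phi)) lam)).
Let mu1m := fst (Copp (Cmul (Cexpi (-2 * phi)) lam)).
Let mu2m := snd (Copp (Cmul (Cexpi (-2 * phi)) lam)).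
Let thp := 2 * phi + (INR (N + 2) * (PI / 2) + INR (N + 2) * phi).
Let thm := -2 * phi + (INR (N + 2) * (3 * (PI / 2)) - INR (N + 2) * phi).

Lemma pos_iff w : solves Rpos (a_plus phi) (q_plus N phi) lam w <-> solvesQ (Qf m (- cos thp) (- sin thp) mu1p mu2p) w.
Proof.
rewrite plus_iff.
assert (E : forall t, Cmul (Copp (Cexpi (2 * phi))) (Cadd lam (q_plus N phi t)) = Qf m (- cos thp) (- sin thp) mu1p mu2p t).
{ intros t. rewrite qplus_form, Qform. reflexivity. }
split; apply solvesQ_ext; intros t; rewrite E; reflexivity.
Qed.

Lemma neg_iff w : solves Rneg (a_minus phi) (q_minus N phi) lam w <-> solvesQ (Qf m (- cos thm) (- sin thm) mu1m mu2m) (fun t => w (- t)).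
Proof.
rewrite minus_iff.
assert (E : forall t, Cmul (Copp (Cexpi (-2 * phi))) (Cadd lam (q_minus N phi (- t))) = Qf m (- cos thm) (- sin thm) mu1m mu2m t).
{ intros t. rewrite qminus_form, Qform. reflexivity. }
split; apply solvesQ_ext; intros t; rewrite E; reflexivity.
Qed.

Lemma LP_of_theta th mu1 mu2 : cos ((th + PI) / 2) <> 0 -> limit_pointQ (Qf m (- cos th) (- sin th) mu1 mu2).
Proof.
intros H. pose proof (LP_Qf m ((th + PI) / 2) mu1 mu2 ltac:(unfold m; lia) H) as L.
replace (2 * ((th + PI) / 2)) with (th + PI) in L by field.
rewrite neg_cos, neg_sin in L. exact L.
Qed.

Lemma LC_of_theta th k mu1 mu2 w : th = 2 * IZR k * PI -> solvesQ (Qf m (- cos th) (- sin th) mu1 mu2) w -> L2_on Rpos w.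
Proof.
intros E HS. rewrite E in HS. destruct (cos_2kPI k) as [A B]. rewrite A, B, Ropp_0 in HS.
replace (- (1)) with (-1) in HS by ring.
unfold m in HS. replace (N + 2)%nat with (S (N + 1)) in HS by lia.
apply (LC_Qf (N + 1) mu1 mu2 w); auto. lia.
Qed.

Lemma INRpos : 0 <= INR N.
Proof. apply pos_INR. Qed.

Lemma pos_nonexc : ~ exceptional N phi -> cos ((thp + PI) / 2) <> 0.
Proof.
intros Hne Hc. apply Hne. destruct (cos_eq_0_0 _ Hc) as [k Hk]. exists k.
pose proof INRpos. unfold thp in Hk. rewrite INR_N2 in Hk.
assert (E : (INR N + 4) * phi = 2 * IZR k * PI - (INR N + 2) * (PI / 2)) by lra.
apply (Rmult_eq_reg_l (INR N + 4)); [|lra]. rewrite E. field. lra.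
Qed.

Lemma neg_nonexc : ~ exceptional N phi -> cos ((thm + PI) / 2) <> 0.
Proof.
intros Hne Hc. apply Hne. destruct (cos_eq_0_0 _ Hc) as [j Hj]. exists (Z.of_nat (N + 2) - j)%Z.
pose proof INRpos. unfold thm in Hj. rewrite INR_N2 in Hj. rewrite IZR_N2k.
assert (E : (INR N + 4) * phi = 3 * (INR N + 2) * (PI / 2) - 2 * IZR j * PI) by lra.
apply (Rmult_eq_reg_l (INR N + 4)); [|lra]. rewrite E. field. lra.
Qed.

Lemma pos_exc : exceptional N phi -> exists k, thp = 2 * IZR k * PI.
Proof.
intros [k Hk]. exists k. pose proof INRpos. unfold thp. rewrite INR_N2, Hk. field. lra.
Qed.

Lemma neg_exc : exceptional N phi -> exists k, thm = 2 * IZR k * PI.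
Proof.
intros [k Hk]. exists (Z.of_nat (N + 2) - k)%Z. pose proof INRpos. unfold thm. rewrite IZR_N2k, INR_N2, Hk. field. lra.
Qed.

Lemma main_thm :
  ((~ exceptional N phi ->
      limit_point Rpos (a_plus phi) (q_plus N phi) lam /\
      limit_point Rneg (a_minus phi) (q_minus N phi) lam) /\
   (exceptional N phi ->
      limit_circle Rpos (a_plus phi) (q_plus N phi) lam /\
      limit_circle Rneg (a_minus phi) (q_minus N phi) lam)).
Proof.
split.
- intros Hne. split.
  + apply (transfer_pos _ _ _ _ pos_iff). apply LP_of_theta. apply pos_nonexc; auto.
  + apply (transfer_neg _ _ _ _ neg_iff). apply LP_of_theta. apply neg_nonexc; auto.
- intros He. split.
  + apply (transfer_pos_lc _ _ _ _ pos_iff). destruct (pos_exc He) as [k Hk].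
    intros w. apply (LC_of_theta thp k); auto.
  + apply (transfer_neg_lc _ _ _ _ neg_iff). destruct (neg_exc He) as [k Hk].
    intros w. apply (LC_of_theta thm k); auto.
Qed.
End Main.

Theorem theorem1 (N : nat) (phi : R) (lam : Cx) :
  (1 <= N)%nat -> - PI / 2 < phi < PI / 2 ->
  ((~ exceptional N phi ->
      limit_point Rpos (a_plus phi) (q_plus N phi) lam /\
      limit_point Rneg (a_minus phi) (q_minus N phi) lam) /\
   (exceptional N phi ->
      limit_circle Rpos (a_plus phi) (q_plus N phi) lam /\
      limit_circle Rneg (a_minus phi) (q_minus N phi) lam)).
Proof. intros HN _. exact (main_thm N phi lam HN). Qed.
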